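(* Let $C\subset\mathbb R^3$ be a non-closed embedded curve of length $l>0$ with nowhere vanishing curvature, and let $F\in\mathcal D_*(C)$ be a normal form. Then $F(\Omega_\epsilon)$ is congruent to $\check F(\Omega_\epsilon)$ for sufficiently small $\epsilon>0$ if and only if (1) $C$ lies in a plane, or (2) $C$ has a positive symmetry and $\mu_F$ has a symmetry.
   Context: $C$ is oriented; $J=[-l/2,l/2]$, $\Omega_\epsilon=J\times(-\epsilon,\epsilon)$. ''$F(\Omega_\epsilon)$ is congruent to $G(\Omega_\epsilon)$ for sufficiently small $\epsilon$'' means there exist an isometry $T$ of $\mathbb R^3$ and $\epsilon_0>0$ with $T(F(\Omega_\epsilon))=G(\Omega_\epsilon)$ for all $0<\epsilon<\epsilon_0$. A developable strip along $C$ is the germ of a $C^\infty$ embedding $f(u,v)=f(u,0)+v\,\xi_f(u)$ with $\mathbf c_f(u)=f(u,0)$ parametrizing $C$, $\xi_f$ unit, and zero Gaussian curvature; with the Frenet frame $(\mathbf e,\mathbf n,\mathbf b)$ of $\mathbf c_f$ write $\xi_f=\cos\beta_f\,\mathbf e+\sin\beta_f(\cos\alpha_f\,\mathbf n+\sin\alpha_f\,\mathbf b)$. $\mathcal D(C)$: strips with $\mathbf c_f$ inducing the orientation of $C$ and $0<|\cos\alpha_f|<1$, normalized by $0<|\alpha_f|<\pi/2$ (first angular function), $0<\beta_f<\pi$. Geodesic curvature $\mu_f=\kappa_f\cos\alpha_f$ ($\kappa_f$ the curvature of $\mathbf c_f$); admissible ($\in\mathcal D_*(C)$) if $\mu_f<\min\kappa_f$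 everywhere. A normal form is such a strip $F(s,v)$ defined near $J\times\{0\}$ with $s\mapsto F(s,0)$ an arc-length parametrization of $C$; it is determined by that parametrization and its first angular function (zero Gaussian curvature being $\cot\beta_F=(\alpha_F'+\tau)/(\kappa\sin\alpha_F)$). The dual $\check F$ is the normal form with $\check F(s,0)=F(s,0)$ and first angular function $-\alpha_F$. $\mu_F$ (a function on $[-l/2,l/2]$) has a symmetry if $\mu_F(-s)=\mu_F(s)$ for all $s$. A positive symmetry of $C$ is an orientation-preserving isometry $T\ne\mathrm{id}$ of $\mathbb R^3$ with $T(C)=C$. *)

(* Defs.v *)
From Stdlib Require Import Reals.
From Coquelicot Require Import Coquelicot.
Open Scope R_scope.

Record V3 := mkV3 { v1 : R; v2 : R; v3 : R }.

Definition vadd (u w : V3) : V3 := mkV3 (v1 u + v1 w) (v2 u + v2 w) (v3 u + v3 w).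
Definition vsub (u w : V3) : V3 := mkV3 (v1 u - v1 w) (v2 u - v2 w) (v3 u - v3 w).
Definition vscale (a : R) (u : V3) : V3 := mkV3 (a * v1 u) (a * v2 u) (a * v3 u).
Definition dot (u w : V3) : R := v1 u * v1 w + v2 u * v2 w + v3 u * v3 w.
Definition cross (u w : V3) : V3 :=
  mkV3 (v2 u * v3 w - v3 u * v2 w) (v3 u * v1 w - v1 u * v3 w) (v1 u * v2 w - v2 u * v1 w).
Definition vnorm (u : V3) : R := sqrt (dot u u).
Definition dist3 (u w : V3) : R := vnorm (vsub u w).
Definition det3 (u v w : V3) : R := dot u (cross v w).

Definition smooth_fun (f : R -> R) : Prop := forall (n : nat) (x : R), ex_derive_n f n x.
Definition smooth_curve (c : R -> V3) : Prop :=
  smooth_fun (fun t => v1 (c t)) /\ smooth_fun (fun t => v2 (c t)) /\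
  smooth_fun (fun t => v3 (c t)).
Definition vder (c : R -> V3) (s : R) : V3 :=
  mkV3 (Derive (fun t => v1 (c t)) s) (Derive (fun t => v2 (c t)) s)
       (Derive (fun t => v3 (c t)) s).

Definition inJ (l s : R) : Prop := - l / 2 <= s <= l / 2.
Definition inOmega (l eps s v : R) : Prop := inJ l s /\ - eps < v < eps.

(* ---------- Frenet apparatus (formulas valid for any regular curve;
   for an arc-length parametrization they are the usual ones) ---------- *)
Section Frenet.
Variable c : R -> V3.
Definition d1 := vder c.
Definition d2 := vder (vder c).
Definition d3 := vder (vder (vder c)).
Definition curvature (s : R) : R :=
  vnorm (cross (d1 s) (d2 s)) / (vnorm (d1 s)) ^ 3.
Definition torsion (s : R) : R :=
  det3 (d1 s) (d2 s) (d3 s) / (vnorm (cross (d1 s) (d2 s))) ^ 2.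
Definition tangent (s : R) : V3 := vscale (/ vnorm (d1 s)) (d1 s).
Definition binormal (s : R) : V3 :=
  vscale (/ vnorm (cross (d1 s) (d2 s))) (cross (d1 s) (d2 s)).
Definition principal_normal (s : R) : V3 := cross (binormal s) (tangent s).
End Frenet.

(* ---------- Normal forms of developable strips ----------
   Given the arc-length parametrization c of C and the first angular function
   alpha, the second angular function beta in (0,pi) is fixed by the zero
   Gaussian curvature condition  cot beta = (alpha' + tau)/(kappa sin alpha);
   beta = pi/2 - atan(.) is the unique such value in (0,pi). *)
Definition cot_beta (c : R -> V3) (alpha : R -> R) (s : R) : R :=
  (Derive alpha s + torsion c s) / (curvature c s * sin (alpha s)).
Definition beta_nf (c : R -> V3) (alpha : R -> R) (s : R) : R :=
  PI / 2 - atan (cot_beta c alpha s).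
Definition xi_nf (c : R -> V3) (alpha : R -> R) (s : R) : V3 :=
  vadd (vscale (cos (beta_nf c alpha s)) (tangent c s))
       (vscale (sin (beta_nf c alpha s))
          (vadd (vscale (cos (alpha s)) (principal_normal c s))
                (vscale (sin (alpha s)) (binormal c s)))).
Definition normal_form (c : R -> V3) (alpha : R -> R) (s v : R) : V3 :=
  vadd (c s) (vscale v (xi_nf c alpha s)).
Definition dual_normal_form (c : R -> V3) (alpha : R -> R) : R -> R -> V3 :=
  normal_form c (fun s => - alpha s).
Definition geod_curv (c : R -> V3) (alpha : R -> R) (s : R) : R :=
  curvature c s * cos (alpha s).

Definition arclength_curve (l : R) (c : R -> V3) : Prop :=
  0 < l /\ smooth_curve c /\
  (forall s, inJ l s -> vnorm (vder c s) = 1) /\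
  (forall s t, inJ l s -> inJ l t -> c s = c t -> s = t) /\
  (forall s, inJ l s -> 0 < curvature c s).

Definition admissible_normal_form (l : R) (c : R -> V3) (alpha : R -> R) : Prop :=
  smooth_fun alpha /\
  (forall s, inJ l s -> 0 < Rabs (alpha s) < PI / 2) /\
  (* germ of an embedding near J x {0} *)
  (exists delta, 0 < delta /\
     forall s v s' v', inOmega l delta s v -> inOmega l delta s' v' ->
       normal_form c alpha s v = normal_form c alpha s' v' -> s = s' /\ v = v') /\
  (forall s t, inJ l s -> inJ l t -> geod_curv c alpha s < curvature c t).

Definition isometry3 (T : V3 -> V3) : Prop :=
  forall x y, dist3 (T x) (T y) = dist3 x y.
Definition orientation_preserving (T : V3 -> V3) : Prop :=
  forall x0 x1 x2 x3,
    det3 (vsub (T x1) (T x0)) (vsub (T x2) (T x0)) (vsub (T x3) (T x0)) =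
    det3 (vsub x1 x0) (vsub x2 x0) (vsub x3 x0).

Definition image_Omega (l eps : R) (F : R -> R -> V3) (p : V3) : Prop :=
  exists s v, inOmega l eps s v /\ p = F s v.

Definition congruent_small (l : R) (F G : R -> R -> V3) : Prop :=
  exists T eps0, isometry3 T /\ 0 < eps0 /\
    forall eps, 0 < eps < eps0 ->
      forall p, (exists q, image_Omega l eps F q /\ p = T q) <-> image_Omega l eps G p.

Definition curve_image (l : R) (c : R -> V3) (p : V3) : Prop :=
  exists s, inJ l s /\ p = c s.

Definition lies_in_plane (l : R) (c : R -> V3) : Prop :=
  exists p0 u, u <> mkV3 0 0 0 /\ forall s, inJ l s -> dot (vsub (c s) p0) u = 0.

Definition has_positive_symmetry (l : R) (c : R -> V3) : Prop :=
  exists T, isometry3 T /\ orientation_preserving T /\ (exists x, T x <> x) /\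
    forall p, (exists q, curve_image l c q /\ p = T q) <-> curve_image l c p.

Definition symmetric_on_J (l : R) (f : R -> R) : Prop :=
  forall s, inJ l s -> f (- s) = f s.

(* Main.v *)
Require Import Defs.
From Stdlib Require Import Reals Lra Psatz Classical IndefiniteDescription.
From Coquelicot Require Import Coquelicot.
Open Scope R_scope.

Lemma V3_ext (u w : V3) : v1 u = v1 w -> v2 u = v2 w -> v3 u = v3 w -> u = w.
Proof. destruct u, w; simpl; intros -> -> ->; reflexivity. Qed.

Ltac vext := apply V3_ext; simpl; try ring.

Definition N2 (x : V3) := dot x x.
Definition lin (E1 E2 E3 x : V3) : V3 :=
  vadd (vadd (vscale (v1 x) E1) (vscale (v2 x) E2)) (vscale (v3 x) E3).
Definition e1 := mkV3 1 0 0.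
Definition e2 := mkV3 0 1 0.
Definition e3 := mkV3 0 0 1.
Definition v0 := mkV3 0 0 0.

Lemma N2_ge0 x : 0 <= N2 x.
Proof. destruct x; unfold N2, dot; simpl; nra. Qed.

Lemma N2_eq0 x : N2 x = 0 -> x = v0.
Proof. destruct x as [a b c]; unfold N2, dot; simpl; intros H.
  assert (a = 0) by nra; assert (b = 0) by nra; assert (c = 0) by nra; subst; reflexivity. Qed.

Lemma vnorm_N2 x : vnorm x = sqrt (N2 x).
Proof. reflexivity. Qed.

Lemma vnorm_sq x : vnorm x * vnorm x = N2 x.
Proof. unfold vnorm; apply sqrt_sqrt; apply N2_ge0. Qed.

Lemma vnorm_pos x : x <> v0 -> 0 < vnorm x.
Proof. intros H; unfold vnorm; apply sqrt_lt_R0.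
  destruct (N2_ge0 x) as [h|h]; [exact h| exfalso; apply H, N2_eq0; auto]. Qed.

Lemma det_expand (w a b c : V3) :
  vscale (det3 a b c) w =
  vadd (vadd (vscale (dot w a) (cross b c)) (vscale (dot w b) (cross c a)))
       (vscale (dot w c) (cross a b)).
Proof. destruct w, a, b, c; unfold det3, dot, cross; vext. Qed.

Lemma orth3_zero (w a b c : V3) : det3 a b c <> 0 ->
  dot w a = 0 -> dot w b = 0 -> dot w c = 0 -> w = v0.
Proof. intros Hd Ha Hb Hc.
  assert (H := det_expand w a b c). rewrite Ha, Hb, Hc in H.
  destruct w as [x y z]; unfold vscale in H; simpl in H.
  injection H; intros; unfold v0; f_equal;
  [apply (Rmult_eq_reg_l (det3 a b c)); auto; rewrite H2; destruct a,b,c; unfold cross; simpl; ring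
  |apply (Rmult_eq_reg_l (det3 a b c)); auto; rewrite H1; destruct a,b,c; unfold cross; simpl; ring
  |apply (Rmult_eq_reg_l (det3 a b c)); auto; rewrite H0; destruct a,b,c; unfold cross; simpl; ring].
Qed.

Lemma det3_lin E1 E2 E3 a b c :
  det3 (lin E1 E2 E3 a) (lin E1 E2 E3 b) (lin E1 E2 E3 c) = det3 E1 E2 E3 * det3 a b c.
Proof. destruct E1, E2, E3, a, b, c; unfold det3, lin, dot, cross; simpl; ring. Qed.

Definition orthonormal (E1 E2 E3 : V3) : Prop :=
  dot E1 E1 = 1 /\ dot E2 E2 = 1 /\ dot E3 E3 = 1 /\
  dot E1 E2 = 0 /\ dot E1 E3 = 0 /\ dot E2 E3 = 0.

Lemma dot_lin E1 E2 E3 a b : orthonormal E1 E2 E3 ->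
  dot (lin E1 E2 E3 a) (lin E1 E2 E3 b) = dot a b.
Proof. intros (h1&h2&h3&h4&h5&h6).
  transitivity (v1 a * v1 b * dot E1 E1 + v2 a * v2 b * dot E2 E2 + v3 a * v3 b * dot E3 E3
    + (v1 a * v2 b + v2 a * v1 b) * dot E1 E2 + (v1 a * v3 b + v3 a * v1 b) * dot E1 E3
    + (v2 a * v3 b + v3 a * v2 b) * dot E2 E3).
  - destruct E1, E2, E3, a, b; unfold lin, dot; simpl; ring.
  - rewrite h1,h2,h3,h4,h5,h6; destruct a, b; unfold dot; simpl; ring. Qed.

Lemma gram_det E1 E2 E3 :
  det3 E1 E2 E3 ^ 2 =
  dot E1 E1 * (dot E2 E2 * dot E3 E3 - dot E2 E3 * dot E2 E3)
  - dot E1 E2 * (dot E1 E2 * dot E3 E3 - dot E2 E3 * dot E1 E3)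
  + dot E1 E3 * (dot E1 E2 * dot E2 E3 - dot E2 E2 * dot E1 E3).
Proof. destruct E1, E2, E3; unfold det3, dot, cross; simpl; ring. Qed.

Lemma orth_det_sq E1 E2 E3 : orthonormal E1 E2 E3 -> det3 E1 E2 E3 ^ 2 = 1.
Proof. intros (h1&h2&h3&h4&h5&h6). rewrite gram_det, h1,h2,h3,h4,h5,h6. ring. Qed.

Lemma orth_det_pm E1 E2 E3 : orthonormal E1 E2 E3 ->
  det3 E1 E2 E3 = 1 \/ det3 E1 E2 E3 = -1.
Proof. intros H; apply orth_det_sq in H. 
  assert ((det3 E1 E2 E3 - 1) * (det3 E1 E2 E3 + 1) = 0) by nra.
  apply Rmult_integral in H0; destruct H0; [left|right]; lra. Qed.

Lemma cross_lin E1 E2 E3 a b : orthonormal E1 E2 E3 ->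
  cross (lin E1 E2 E3 a) (lin E1 E2 E3 b) =
  vscale (det3 E1 E2 E3) (lin E1 E2 E3 (cross a b)).
Proof. intros HO.
  assert (HD : det3 E1 E2 E3 <> 0).
  { intro h; apply orth_det_sq in HO; rewrite h in HO; lra. }
  set (w := vsub (cross (lin E1 E2 E3 a) (lin E1 E2 E3 b))
                 (vscale (det3 E1 E2 E3) (lin E1 E2 E3 (cross a b)))).
  assert (key : forall k, dot w (lin E1 E2 E3 k) = 0).
  { intro k.
    assert (h1 : dot (cross (lin E1 E2 E3 a) (lin E1 E2 E3 b)) (lin E1 E2 E3 k)
       = det3 (lin E1 E2 E3 k) (lin E1 E2 E3 a) (lin E1 E2 E3 b)).
    { destruct (lin E1 E2 E3 a), (lin E1 E2 E3 b), (lin E1 E2 E3 k); unfold det3, dot, cross; simpl; ring. }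
    assert (h2 : dot w (lin E1 E2 E3 k) =
       dot (cross (lin E1 E2 E3 a) (lin E1 E2 E3 b)) (lin E1 E2 E3 k)
       - det3 E1 E2 E3 * dot (lin E1 E2 E3 (cross a b)) (lin E1 E2 E3 k)).
    { unfold w; destruct (cross (lin E1 E2 E3 a) (lin E1 E2 E3 b)), (lin E1 E2 E3 (cross a b)), (lin E1 E2 E3 k);
      unfold dot, vsub, vscale; simpl; ring. }
    rewrite h2, h1, det3_lin, dot_lin by exact HO.
    destruct a, b, k; unfold det3, dot, cross; simpl; ring. }
  assert (w = v0).
  { apply (orth3_zero w E1 E2 E3 HD).
    - replace E1 with (lin E1 E2 E3 e1) by (unfold lin, e1; vext). apply key.
    - replace E2 with (lin E1 E2 E3 e2) by (unfold lin, e2; vext). apply key.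
    - replace E3 with (lin E1 E2 E3 e3) by (unfold lin, e3; vext). apply key. }
  unfold w in H. destruct (cross (lin E1 E2 E3 a) (lin E1 E2 E3 b)), (vscale (det3 E1 E2 E3) (lin E1 E2 E3 (cross a b))).
  unfold vsub, v0 in H; simpl in H; injection H; intros; vext; lra.
Qed.

Lemma dist3_N2 x y : dist3 x y = sqrt (N2 (vsub x y)).
Proof. reflexivity. Qed.

Lemma iso_N2 T x y : isometry3 T -> N2 (vsub (T x) (T y)) = N2 (vsub x y).
Proof. intros H; specialize (H x y); rewrite !dist3_N2 in H.
  apply sqrt_inj; auto; apply N2_ge0. Qed.

Lemma iso_affine T : isometry3 T ->
  exists b E1 E2 E3, orthonormal E1 E2 E3 /\ forall x, T x = vadd b (lin E1 E2 E3 x).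
Proof. intros HT.
  set (M x := vsub (T x) (T v0)).
  assert (HM : forall x y, dot (M x) (M y) = dot x y).
  { intros x y.
    assert (a1 := iso_N2 T x v0 HT). assert (a2 := iso_N2 T y v0 HT).
    assert (a3 := iso_N2 T x y HT).
    assert (e : vsub (T x) (T y) = vsub (M x) (M y)) by (unfold M; vext).
    rewrite e in a3. fold (M x) in a1. fold (M y) in a2.
    revert a1 a2 a3. generalize (M x) (M y). intros p q.
    destruct p, q, x, y; unfold N2, dot, vsub, v0; simpl; intros; nra. }
  exists (T v0), (M e1), (M e2), (M e3). split.
  { repeat split; rewrite HM; unfold dot, e1, e2, e3; simpl; ring. }
  intros x.
  assert (Hd : M x = lin (M e1) (M e2) (M e3) x).
  { assert (O : orthonormal (M e1) (M e2) (M e3)) by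
      (repeat split; rewrite HM; unfold dot, e1, e2, e3; simpl; ring).
    apply (f_equal (fun z => z)) .
    set (y := lin (M e1) (M e2) (M e3) x).
    assert (h1 : dot (M x) y = N2 x).
    { unfold y, lin. 
      transitivity (v1 x * dot (M x) (M e1) + v2 x * dot (M x) (M e2) + v3 x * dot (M x) (M e3)).
      - destruct (M x), (M e1), (M e2), (M e3); unfold dot; simpl; ring.
      - rewrite !HM; destruct x; unfold N2, dot, e1, e2, e3; simpl; ring. }
    assert (h2 : N2 y = N2 x) by (unfold y, N2; rewrite dot_lin by exact O; reflexivity).
    assert (h3 : N2 (M x) = N2 x) by (unfold N2; apply HM).
    assert (N2 (vsub (M x) y) = 0).
    { transitivity (N2 (M x) - 2 * dot (M x) y + N2 y).
      - unfold N2; destruct (M x), y; unfold dot, vsub; simpl; ring.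
      - rewrite h1, h2, h3; ring. }
    apply N2_eq0 in H. destruct (M x), y; unfold vsub, v0 in H; simpl in H; injection H; intros; vext; lra. }
  rewrite <- Hd; unfold M; vext.
Qed.

Lemma smooth_ex f x : smooth_fun f -> ex_derive f x.
Proof. intros H; exact (H 1%nat x). Qed.

Lemma Derive_n_Derive f n x : Derive_n (Derive f) n x = Derive_n f (S n) x.
Proof. revert x; induction n; intros x; [reflexivity|].
  simpl. apply Derive_ext. intro t. rewrite IHn. reflexivity. Qed.

Lemma smooth_Derive f : smooth_fun f -> smooth_fun (Derive f).
Proof. intros H n x. destruct n as [|n]. simpl; exact I.
  simpl. apply (ex_derive_ext (Derive_n f (S n))). intro t; symmetry; apply Derive_n_Derive.
  exact (H (S (S n)) x). Qed.

Lemma loc_all (P : R -> Prop) x : (forall y, P y) -> locally x P.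
Proof. intros H; exists (mkposreal 1 Rlt_0_1); intros; apply H. Qed.

Lemma smooth_plus f g : smooth_fun f -> smooth_fun g -> smooth_fun (fun x => f x + g x).
Proof. intros Hf Hg n x. apply ex_derive_n_plus; apply loc_all; intros; auto. Qed.

Lemma smooth_scal a f : smooth_fun f -> smooth_fun (fun x => a * f x).
Proof. intros Hf n x. apply ex_derive_n_scal_l; auto. Qed.

Lemma smooth_const a : smooth_fun (fun _ => a).
Proof. intros n x. apply ex_derive_n_const. Qed.

Lemma smooth_rev f : smooth_fun f -> smooth_fun (fun x => f (- x)).
Proof. intros Hf n x. apply ex_derive_n_comp_opp; apply loc_all; intros; auto. Qed.

Lemma smooth_opp f : smooth_fun f -> smooth_fun (fun x => - f x).
Proof. intros Hf n x. apply ex_derive_n_opp; auto. Qed.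

Lemma smooth_ext f g : (forall x, f x = g x) -> smooth_fun f -> smooth_fun g.
Proof. intros E Hf n x; apply (ex_derive_n_ext f); auto. Qed.

Definition vsmooth := smooth_curve.

Lemma vsmooth_vder p : vsmooth p -> vsmooth (vder p).
Proof. intros (h1&h2&h3); repeat split; simpl; apply smooth_Derive; auto. Qed.

Definition aff (b E1 E2 E3 x : V3) := vadd b (lin E1 E2 E3 x).

Lemma smooth_comb (a k1 k2 k3 : R) f g h : smooth_fun f -> smooth_fun g -> smooth_fun h ->
  smooth_fun (fun t => a + (f t * k1 + g t * k2 + h t * k3)).
Proof. intros Hf Hg Hh.
  apply smooth_plus; [apply smooth_const|].
  apply smooth_plus; [apply smooth_plus|];
  (eapply smooth_ext; [intro; apply Rmult_comm| apply smooth_scal; auto]).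
Qed.

Lemma vsmooth_aff b E1 E2 E3 p : vsmooth p -> vsmooth (fun s => aff b E1 E2 E3 (p s)).
Proof. intros (h1&h2&h3); unfold aff, lin; repeat split; simpl; apply smooth_comb; auto. Qed.

Lemma vsmooth_rev p : vsmooth p -> vsmooth (fun s => p (- s)).
Proof. intros (h1&h2&h3); repeat split; simpl; apply (smooth_rev (fun t => _ (p t))); auto. Qed.

Lemma Derive_aff3 (a k1 k2 k3 : R) (f g h : R -> R) x :
  ex_derive f x -> ex_derive g x -> ex_derive h x ->
  Derive (fun t => a + (f t * k1 + g t * k2 + h t * k3)) x =
  Derive f x * k1 + Derive g x * k2 + Derive h x * k3.
Proof. intros Hf Hg Hh.
  apply is_derive_unique. auto_derive. repeat split; auto. rewrite !Rmult_1_l; reflexivity.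
Qed.

Lemma vder_aff b E1 E2 E3 p s : vsmooth p ->
  vder (fun t => aff b E1 E2 E3 (p t)) s = lin E1 E2 E3 (vder p s).
Proof. intros (h1&h2&h3). unfold vder, aff, lin; apply V3_ext; simpl;
  rewrite Derive_aff3 by (apply smooth_ex; auto); ring. Qed.

Lemma Derive_rev f x : ex_derive f (- x) -> Derive (fun t => f (- t)) x = - Derive f (- x).
Proof. intros H. rewrite (Derive_comp f Ropp x H).
  - replace (Derive Ropp x) with (-1). ring. symmetry; apply is_derive_unique; auto_derive; auto; ring.
  - auto_derive; auto. Qed.

Lemma opp_m1 (a b : R) : a = b -> - a = -1 * b.
Proof. intros ->; ring. Qed.

Lemma vder_rev p s : vsmooth p -> vder (fun t => p (- t)) s = vscale (-1) (vder p (- s)).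
Proof. intros (h1&h2&h3). unfold vder; apply V3_ext; simpl;
  rewrite (Derive_rev (fun t => _ (p t))) by (apply smooth_ex; auto); apply opp_m1; reflexivity. Qed.

Lemma vder_ext p q s : (forall t, p t = q t) -> vder p s = vder q s.
Proof. intros E; unfold vder; apply V3_ext; simpl; apply Derive_ext; intro; rewrite E; auto. Qed.

Lemma derive_zero_on_J l (f : R -> R) s : 0 < l -> inJ l s -> ex_derive f s ->
  (forall t, inJ l t -> f t = 0) -> Derive f s = 0.
Proof. intros Hl Hs Hd Hz.
  assert (HD := Derive_correct f s Hd). apply is_derive_Reals in HD.
  set (L := Derive f s) in *.
  destruct (Req_dec L 0) as [|HL]; auto. exfalso.
  assert (He : 0 < Rabs L / 2) by (apply Rabs_pos_lt in HL; lra).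
  destruct (HD _ He) as [[d Hdp] Hd']. simpl in Hd'.
  unfold inJ in Hs.
  destruct (Rlt_or_le s (l/2)) as [Hlt|Hge].
  - set (h := Rmin (d/2) ((l/2 - s))).
    assert (hp : 0 < h) by (unfold h; apply Rmin_glb_lt; lra).
    assert (h1 : h <= d/2) by apply Rmin_l. assert (h2 : h <= l/2 - s) by apply Rmin_r.
    specialize (Hd' h (Rgt_not_eq _ _ hp)).
    rewrite Rabs_pos_eq in Hd' by lra. specialize (Hd' ltac:(lra)).
    rewrite (Hz s), (Hz (s + h)) in Hd' by (unfold inJ; lra).
    replace ((0 - 0) / h - L) with (- L) in Hd' by (field; lra).
    rewrite Rabs_Ropp in Hd'. lra.
  - set (h := - Rmin (d/2) (l/2)).
    assert (hp : 0 < Rmin (d/2) (l/2)) by (apply Rmin_glb_lt; lra).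
    assert (h1 : Rmin (d/2) (l/2) <= d/2) by apply Rmin_l. assert (h2 : Rmin (d/2) (l/2) <= l/2) by apply Rmin_r.
    specialize (Hd' h ltac:(unfold h; lra)).
    unfold h in Hd'; rewrite Rabs_Ropp, Rabs_pos_eq in Hd' by lra. specialize (Hd' ltac:(lra)).
    rewrite (Hz s), (Hz (s + - Rmin (d/2) (l/2))) in Hd' by (unfold inJ; lra).
    replace ((0 - 0) / - Rmin (d/2) (l/2) - L) with (- L) in Hd' by (field; lra).
    rewrite Rabs_Ropp in Hd'. lra.
Qed.

Lemma eqJ_derive l (f g : R -> R) s : 0 < l -> inJ l s -> ex_derive f s -> ex_derive g s ->
  (forall t, inJ l t -> f t = g t) -> Derive f s = Derive g s.
Proof. intros Hl Hs Hf Hg E.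
  assert (Derive (fun t => f t - g t) s = 0).
  { apply (derive_zero_on_J l); auto. auto_derive; auto.
    intros t Ht; rewrite E; auto; ring. }
  assert (Derive (fun t => f t - g t) s = Derive f s - Derive g s).
  { apply is_derive_unique; auto_derive; auto. rewrite !Rmult_1_l; reflexivity. }
  lra. Qed.

Lemma vder_eqJ l p q s : 0 < l -> inJ l s -> vsmooth p -> vsmooth q ->
  (forall t, inJ l t -> p t = q t) -> vder p s = vder q s.
Proof. intros Hl Hs (p1&p2&p3) (q1&q2&q3) E. unfold vder; apply V3_ext; simpl;
  apply (eqJ_derive l); auto; try (apply smooth_ex; auto); intros t Ht; rewrite E; auto. Qed.

Lemma lin_scale E1 E2 E3 k x : lin E1 E2 E3 (vscale k x) = vscale k (lin E1 E2 E3 x).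
Proof. destruct x; unfold lin; vext. Qed.

Lemma vnorm_scale k x : vnorm (vscale k x) = Rabs k * vnorm x.
Proof. unfold vnorm. rewrite <- sqrt_Rsqr_abs, <- sqrt_mult_alt.
  f_equal; destruct x; unfold dot, Rsqr; simpl; ring. apply Rle_0_sqr. Qed.

Lemma vnorm_lin E1 E2 E3 x : orthonormal E1 E2 E3 -> vnorm (lin E1 E2 E3 x) = vnorm x.
Proof. intros H; unfold vnorm; rewrite dot_lin; auto. Qed.

Lemma cross_scale_l k a b : cross (vscale k a) b = vscale k (cross a b).
Proof. destruct a, b; unfold cross; vext. Qed.
Lemma cross_scale_r k a b : cross a (vscale k b) = vscale k (cross a b).
Proof. destruct a, b; unfold cross; vext. Qed.
Lemma det3_scale k1 k2 k3 a b c :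
  det3 (vscale k1 a) (vscale k2 b) (vscale k3 c) = k1 * k2 * k3 * det3 a b c.
Proof. destruct a, b, c; unfold det3, dot, cross; simpl; ring. Qed.
Lemma vscale_vscale k m x : vscale k (vscale m x) = vscale (k * m) x.
Proof. destruct x; vext. Qed.
Lemma vscale_1 x : vscale 1 x = x.
Proof. destruct x; vext. Qed.

Lemma lin_is_aff E1 E2 E3 x : lin E1 E2 E3 x = aff v0 E1 E2 E3 x.
Proof. destruct x; unfold aff, lin, v0; vext. Qed.
Lemma scale_is_aff k x : vscale k x = aff v0 (vscale k e1) (vscale k e2) (vscale k e3) x.
Proof. destruct x; unfold aff, lin, v0, e1, e2, e3; vext. Qed.

Lemma scale_is_lin k x : vscale k x = lin (vscale k e1) (vscale k e2) (vscale k e3) x.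
Proof. destruct x; unfold lin, e1, e2, e3; vext. Qed.

Lemma vsmooth_lin E1 E2 E3 p : vsmooth p -> vsmooth (fun t => lin E1 E2 E3 (p t)).
Proof. intros H. destruct (vsmooth_aff v0 E1 E2 E3 p H) as (h1&h2&h3).
  repeat split; [apply (smooth_ext _ _ (fun x => f_equal v1 (eq_sym (lin_is_aff _ _ _ _))) h1)
  |apply (smooth_ext _ _ (fun x => f_equal v2 (eq_sym (lin_is_aff _ _ _ _))) h2)
  |apply (smooth_ext _ _ (fun x => f_equal v3 (eq_sym (lin_is_aff _ _ _ _))) h3)]. Qed.
Lemma vsmooth_scale k p : vsmooth p -> vsmooth (fun t => vscale k (p t)).
Proof. intros H. destruct (vsmooth_aff v0 (vscale k e1) (vscale k e2) (vscale k e3) p H) as (h1&h2&h3).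
  repeat split; [apply (smooth_ext _ _ (fun x => f_equal v1 (eq_sym (scale_is_aff _ _))) h1)
  |apply (smooth_ext _ _ (fun x => f_equal v2 (eq_sym (scale_is_aff _ _))) h2)
  |apply (smooth_ext _ _ (fun x => f_equal v3 (eq_sym (scale_is_aff _ _))) h3)]. Qed.

Lemma vder_lin E1 E2 E3 p s : vsmooth p ->
  vder (fun t => lin E1 E2 E3 (p t)) s = lin E1 E2 E3 (vder p s).
Proof. intros H. rewrite (vder_ext _ (fun t => aff v0 E1 E2 E3 (p t))).
  apply vder_aff; auto. intro; apply lin_is_aff. Qed.
Lemma vder_scale_rev k p s : vsmooth p ->
  vder (fun t => vscale k (p (- t))) s = vscale (- k) (vder p (- s)).
Proof. intros H. rewrite (vder_ext _ (fun t => aff v0 (vscale k e1) (vscale k e2) (vscale k e3) ((fun u => p (- u)) t))).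
  rewrite vder_aff, <- scale_is_lin, vder_rev, vscale_vscale; auto.
  f_equal; ring. apply vsmooth_rev; auto. intro; apply scale_is_aff. Qed.

Lemma Rabs_m1 : Rabs (-1) = 1.
Proof. unfold Rabs; destruct Rcase_abs; lra. Qed.

Ltac norm1 := match goal with |- context[vscale ?k _] => replace k with 1 by ring end; rewrite vscale_1; auto.

Section Rev.
Variables (l : R) (c : R -> V3) (b0 E1 E2 E3 : V3).
Hypothesis Hl : 0 < l.
Hypothesis Hc : vsmooth c.
Hypothesis HO : orthonormal E1 E2 E3.
Hypothesis Hsym : forall s, inJ l s -> c (- s) = aff b0 E1 E2 E3 (c s).
Let L := lin E1 E2 E3.

Lemma inJ_opp s : inJ l s -> inJ l (- s).
Proof. unfold inJ; lra. Qed.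

Lemma rev_d1 s : inJ l s -> Defs.d1 c (- s) = vscale (-1) (L (Defs.d1 c s)).
Proof. intros Hs.
  assert (e : vder (fun t => vscale 1 (c (- t))) s = vder (fun t => aff b0 E1 E2 E3 (c t)) s).
  { apply (vder_eqJ l); auto. apply vsmooth_scale, vsmooth_rev; auto. apply vsmooth_aff; auto.
    intros t Ht; rewrite vscale_1; auto. }
  rewrite vder_scale_rev, vder_aff in e by auto. unfold Defs.d1, L. rewrite <- e.
  rewrite vscale_vscale. norm1. Qed.

Lemma rev_d2 s : inJ l s -> Defs.d2 c (- s) = L (Defs.d2 c s).
Proof. intros Hs.
  assert (e : vder (fun t => vscale (-1) (vder c (- t))) s = vder (fun t => L (vder c t)) s).
  { apply (vder_eqJ l); auto. apply vsmooth_scale, vsmooth_rev, vsmooth_vder; auto.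
    apply vsmooth_lin, vsmooth_vder; auto.
    intros t Ht. assert (h := rev_d1 t Ht). unfold Defs.d1 in h. rewrite h, vscale_vscale.
    replace (-1 * -1) with 1 by ring. apply vscale_1. }
  unfold L in e. rewrite vder_scale_rev, vder_lin in e by (apply vsmooth_vder; auto).
  unfold Defs.d2, L. rewrite <- e. replace (- -1) with 1 by ring. rewrite vscale_1; auto. Qed.

Lemma rev_d3 s : inJ l s -> Defs.d3 c (- s) = vscale (-1) (L (Defs.d3 c s)).
Proof. intros Hs.
  assert (e : vder (fun t => vscale 1 (vder (vder c) (- t))) s = vder (fun t => L (vder (vder c) t)) s).
  { apply (vder_eqJ l); auto. apply vsmooth_scale, vsmooth_rev, vsmooth_vder, vsmooth_vder; auto.
    apply vsmooth_lin, vsmooth_vder, vsmooth_vder; auto.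
    intros t Ht. rewrite vscale_1. apply rev_d2; auto. }
  unfold L in e. rewrite vder_scale_rev, vder_lin in e by (do 2 apply vsmooth_vder; auto).
  unfold Defs.d3, L. rewrite <- e, vscale_vscale. norm1. Qed.

Let D := det3 E1 E2 E3.

Lemma D_abs : Rabs D = 1.
Proof. destruct (orth_det_pm _ _ _ HO) as [h|h]; unfold D; rewrite h; unfold Rabs; destruct Rcase_abs; lra. Qed.

Lemma rev_cross s : inJ l s -> cross (Defs.d1 c (- s)) (Defs.d2 c (- s)) = vscale (- D) (L (cross (Defs.d1 c s) (Defs.d2 c s))).
Proof. intros Hs. rewrite rev_d1, rev_d2, cross_scale_l by auto. unfold L; rewrite cross_lin by auto.
  rewrite vscale_vscale. fold D. f_equal; ring. Qed.

Lemma rev_curvature s : inJ l s -> curvature c (- s) = curvature c s.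
Proof. intros Hs. unfold curvature. rewrite rev_cross by auto. fold (Defs.d1 c).
  rewrite rev_d1 by auto. rewrite !vnorm_scale. unfold L; rewrite !vnorm_lin by auto.
  rewrite Rabs_Ropp, D_abs, Rabs_m1, !Rmult_1_l. reflexivity. Qed.

Lemma rev_torsion s : inJ l s -> torsion c (- s) = D * torsion c s.
Proof. intros Hs. unfold torsion. rewrite rev_cross by auto. fold (Defs.d1 c) (Defs.d2 c) (Defs.d3 c).
  rewrite rev_d1, rev_d2, rev_d3 by auto.
  replace (L (Defs.d2 c s)) with (vscale 1 (L (Defs.d2 c s))) by apply vscale_1.
  rewrite det3_scale. unfold L; rewrite det3_lin, vnorm_scale, vnorm_lin by auto.
  rewrite Rabs_Ropp, D_abs. fold D. rewrite !Rmult_1_l. unfold Rdiv; ring. Qed.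

Lemma rev_tangent s : inJ l s -> tangent c (- s) = vscale (-1) (L (tangent c s)).
Proof. intros Hs. unfold tangent. fold (Defs.d1 c). rewrite rev_d1 by auto.
  rewrite vnorm_scale. unfold L; rewrite vnorm_lin, Rabs_m1, Rmult_1_l by auto.
  rewrite lin_scale, !vscale_vscale. f_equal; ring. Qed.

Lemma rev_binormal s : inJ l s -> binormal c (- s) = vscale (- D) (L (binormal c s)).
Proof. intros Hs. unfold binormal. fold (Defs.d1 c) (Defs.d2 c). rewrite rev_cross by auto.
  rewrite vnorm_scale. unfold L; rewrite vnorm_lin, Rabs_Ropp, D_abs, Rmult_1_l by auto.
  rewrite lin_scale, !vscale_vscale. f_equal; ring. Qed.

Lemma rev_normal s : inJ l s -> principal_normal c (- s) = L (principal_normal c s).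
Proof. intros Hs. unfold principal_normal. rewrite rev_binormal, rev_tangent by auto.
  rewrite cross_scale_l, cross_scale_r. unfold L; rewrite cross_lin by auto.
  rewrite !vscale_vscale. fold D.
  assert (HD2 : D ^ 2 = 1) by (apply orth_det_sq; auto).
  match goal with |- vscale ?k _ = _ => replace k with 1 by nra end. apply vscale_1. Qed.
End Rev.

Lemma frame_gen t x : N2 t = 1 -> x <> v0 -> dot t x = 0 ->
  orthonormal t (cross (vscale (/ vnorm x) x) t) (vscale (/ vnorm x) x) /\
  det3 t (cross (vscale (/ vnorm x) x) t) (vscale (/ vnorm x) x) = 1.
Proof. intros Ht Hx Htx.
  assert (Hn := vnorm_pos x Hx). assert (Hs := vnorm_sq x).
  set (k := / vnorm x). set (b := vscale k x).
  assert (Hb : dot b b = 1).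
  { unfold b. transitivity (k * k * N2 x). destruct x; unfold N2, dot; simpl; ring.
    rewrite <- Hs. unfold k. field. lra. }
  assert (Htb : dot t b = 0).
  { unfold b. transitivity (k * dot t x). destruct x, t; unfold dot; simpl; ring. rewrite Htx; ring. }
  unfold N2 in Ht.
  assert (L1 : forall u w : V3, dot (cross u w) (cross u w) = dot u u * dot w w - dot u w ^ 2)
    by (intros [] []; unfold dot, cross; simpl; ring).
  repeat split.
  - exact Ht.
  - rewrite L1, Hb, Ht. replace (dot b t) with (dot t b) by (destruct b, t; unfold dot; simpl; ring).
    rewrite Htb; ring.
  - exact Hb.
  - destruct b, t; unfold dot, cross; simpl; ring.
  - exact Htb.
  - destruct b, t; unfold dot, cross; simpl; ring.
  - transitivity (dot b b * dot t t - dot t b ^ 2).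
    destruct b, t; unfold det3, dot, cross; simpl; ring.
    rewrite Hb, Ht, Htb; ring.
Qed.

Lemma dot_cross_l a b : dot a (cross a b) = 0.
Proof. destruct a, b; unfold dot, cross; simpl; ring. Qed.

Section Frame.
Variables (l : R) (c : R -> V3).
Hypothesis Hc : arclength_curve l c.

Lemma ac_l : 0 < l. Proof. apply Hc. Qed.
Lemma ac_smooth : vsmooth c. Proof. apply Hc. Qed.
Lemma ac_unit s : inJ l s -> N2 (Defs.d1 c s) = 1.
Proof. intros Hs. destruct Hc as (_&_&H&_). specialize (H s Hs).
  rewrite <- vnorm_sq. unfold Defs.d1; rewrite H; ring. Qed.
Lemma ac_vnorm1 s : inJ l s -> vnorm (Defs.d1 c s) = 1.
Proof. intros Hs. destruct Hc as (_&_&H&_). apply H; auto. Qed.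
Lemma ac_inj s t : inJ l s -> inJ l t -> c s = c t -> s = t.
Proof. destruct Hc as (_&_&_&H&_). apply H. Qed.
Lemma ac_curv s : inJ l s -> 0 < curvature c s.
Proof. destruct Hc as (_&_&_&_&H). apply H. Qed.

Lemma ac_cross s : inJ l s -> cross (Defs.d1 c s) (Defs.d2 c s) <> v0.
Proof. intros Hs E. assert (h := ac_curv s Hs). unfold curvature in h. rewrite E in h.
  unfold vnorm, v0, dot in h; simpl in h. replace (0*0+0*0+0*0) with 0 in h by ring.
  rewrite sqrt_0 in h. unfold Rdiv in h. rewrite Rmult_0_l in h. lra. Qed.

Lemma ac_tangent s : inJ l s -> tangent c s = Defs.d1 c s.
Proof. intros Hs. unfold tangent. fold (Defs.d1 c). rewrite ac_vnorm1, Rinv_1 by auto. apply vscale_1. Qed.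

Lemma ac_frame s : inJ l s ->
  orthonormal (tangent c s) (principal_normal c s) (binormal c s) /\
  det3 (tangent c s) (principal_normal c s) (binormal c s) = 1.
Proof. intros Hs. unfold principal_normal. rewrite ac_tangent by auto.
  unfold binormal. fold (Defs.d1 c) (Defs.d2 c).
  apply frame_gen. apply ac_unit; auto. apply ac_cross; auto. apply dot_cross_l. Qed.
End Frame.

Definition xcoef (a b : R) := mkV3 (cos b) (sin b * cos a) (sin b * sin a).

Lemma xi_lin c alpha s :
  xi_nf c alpha s = lin (tangent c s) (principal_normal c s) (binormal c s)
     (xcoef (alpha s) (beta_nf c alpha s)).
Proof. unfold xi_nf, lin, xcoef; simpl. destruct (tangent c s), (principal_normal c s), (binormal c s); vext. Qed.

Lemma N2_xcoef a b : N2 (xcoef a b) = 1.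
Proof. unfold N2, xcoef, dot; simpl.
  replace (cos b * cos b + sin b * cos a * (sin b * cos a) + sin b * sin a * (sin b * sin a))
   with (cos b ^ 2 + sin b ^ 2 * (sin a ^ 2 + cos a ^ 2)) by ring.
  rewrite !sin2_cos2 ||  idtac. 
  assert (h1 := sin2_cos2 a). assert (h2 := sin2_cos2 b). unfold Rsqr in *. nra. Qed.

Lemma xi_unit l c alpha s : arclength_curve l c -> inJ l s -> N2 (xi_nf c alpha s) = 1.
Proof. intros Hc Hs. rewrite xi_lin. unfold N2. destruct (ac_frame l c Hc s Hs) as [HO _].
  rewrite dot_lin by auto. apply N2_xcoef. Qed.

Lemma congr_of l F G T (rho : R -> R) : isometry3 T ->
  (forall s, inJ l s -> inJ l (rho s)) -> (forall s, rho (rho s) = s) ->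
  (forall s v, inJ l s -> T (F s v) = G (rho s) v) -> congruent_small l F G.
Proof. intros HT HJ Hr HF. exists T, 1. split; auto. split; [lra|].
  intros eps _ p; split.
  - intros (q & (s & v & (Hs & Hv) & ->) & ->). exists (rho s), v. split; [split|]; auto.
  - intros (s & v & (Hs & Hv) & ->). exists (F (rho s) v). split.
    + exists (rho s), v; split; [split|]; auto.
    + rewrite HF by auto. rewrite Hr; auto.
Qed.

Lemma Derive_dot_sub p p0 u s : vsmooth p ->
  Derive (fun t => dot (vsub (p t) p0) u) s = dot (vder p s) u.
Proof. intros (h1&h2&h3).
  rewrite (Derive_ext _ (fun t => (- dot p0 u) + (v1 (p t) * v1 u + v2 (p t) * v2 u + v3 (p t) * v3 u))).
  rewrite Derive_aff3 by (apply smooth_ex; auto). unfold vder, dot; simpl; ring.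
  intro t; unfold dot, vsub; simpl; ring. Qed.

Lemma ex_aff3 (a k1 k2 k3 : R) (f g h : R -> R) x :
  ex_derive f x -> ex_derive g x -> ex_derive h x ->
  ex_derive (fun t => a + (f t * k1 + g t * k2 + h t * k3)) x.
Proof. intros; auto_derive; auto. Qed.

Lemma ex_derive_dot_sub p p0 u s : vsmooth p -> ex_derive (fun t => dot (vsub (p t) p0) u) s.
Proof. intros (h1&h2&h3).
  apply (ex_derive_ext (fun t => (- dot p0 u) + (v1 (p t) * v1 u + v2 (p t) * v2 u + v3 (p t) * v3 u))).
  intro t; unfold dot, vsub; simpl; ring.
  apply ex_aff3; apply smooth_ex; auto. Qed.

Lemma vsub_v0 x : vsub x v0 = x.
Proof. destruct x; unfold v0; vext. Qed.

Section Planar.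
Variables (l : R) (c : R -> V3) (alpha : R -> R) (p0 u : V3).
Hypothesis Hc : arclength_curve l c.
Hypothesis Ha : smooth_fun alpha.
Hypothesis Hu : u <> v0.
Hypothesis Hp : forall s, inJ l s -> dot (vsub (c s) p0) u = 0.

Lemma pl_d1 s : inJ l s -> dot (Defs.d1 c s) u = 0.
Proof. intros Hs. unfold Defs.d1. rewrite <- (Derive_dot_sub c p0) by apply (ac_smooth l c Hc).
  apply (derive_zero_on_J l); auto. apply (ac_l l c Hc). apply ex_derive_dot_sub, (ac_smooth l c Hc). Qed.

Lemma pl_d2 s : inJ l s -> dot (Defs.d2 c s) u = 0.
Proof. intros Hs. unfold Defs.d2. rewrite <- (Derive_dot_sub (vder c) v0) by (apply vsmooth_vder, (ac_smooth l c Hc)).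
  apply (derive_zero_on_J l); auto. apply (ac_l l c Hc). apply ex_derive_dot_sub, vsmooth_vder, (ac_smooth l c Hc).
  intros t Ht. rewrite vsub_v0. apply pl_d1; auto. Qed.

Lemma pl_d3 s : inJ l s -> dot (Defs.d3 c s) u = 0.
Proof. intros Hs. unfold Defs.d3. rewrite <- (Derive_dot_sub (vder (vder c)) v0) by (do 2 apply vsmooth_vder; apply (ac_smooth l c Hc)).
  apply (derive_zero_on_J l); auto. apply (ac_l l c Hc). apply ex_derive_dot_sub; do 2 apply vsmooth_vder; apply (ac_smooth l c Hc).
  intros t Ht. rewrite vsub_v0. apply pl_d2; auto. Qed.

Lemma dot_comm a b : dot a b = dot b a.
Proof. destruct a, b; unfold dot; simpl; ring. Qed.

Lemma pl_torsion s : inJ l s -> torsion c s = 0.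
Proof. intros Hs. unfold torsion.
  assert (det3 (Defs.d1 c s) (Defs.d2 c s) (Defs.d3 c s) = 0).
  { assert (h := det_expand u (Defs.d1 c s) (Defs.d2 c s) (Defs.d3 c s)).
    rewrite (dot_comm u), (dot_comm u (Defs.d2 c s)), (dot_comm u (Defs.d3 c s)), pl_d1, pl_d2, pl_d3 in h by auto.
    destruct (Req_dec (det3 (Defs.d1 c s) (Defs.d2 c s) (Defs.d3 c s)) 0) as [|hn]; auto.
    exfalso; apply Hu. destruct u as [x y z]. unfold vscale, vadd, v0 in h; simpl in h.
    injection h; intros. unfold v0; f_equal;
    [apply (Rmult_eq_reg_l (det3 (Defs.d1 c s) (Defs.d2 c s) (Defs.d3 c s)))
    |apply (Rmult_eq_reg_l (det3 (Defs.d1 c s) (Defs.d2 c s) (Defs.d3 c s)))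
    |apply (Rmult_eq_reg_l (det3 (Defs.d1 c s) (Defs.d2 c s) (Defs.d3 c s)))]; auto; lra. }
  rewrite H. unfold Rdiv; ring. Qed.

Definition Rl (y : V3) := vsub y (vscale (2 * dot y u / N2 u) u).
Definition Refl (x : V3) := vsub x (vscale (2 * dot (vsub x p0) u / N2 u) u).

Lemma N2u_pos : 0 < N2 u.
Proof. destruct (N2_ge0 u) as [h|h]; auto. exfalso; apply Hu, N2_eq0; auto. Qed.

Lemma Rl_N2 y : N2 (Rl y) = N2 y.
Proof. assert (h := N2u_pos). unfold Rl, N2 in *. destruct y, u; unfold dot, vsub, vscale in *; simpl in *. field. lra. Qed.

Lemma Refl_iso : isometry3 Refl.
Proof. intros x y. rewrite !dist3_N2. f_equal.
  replace (vsub (Refl x) (Refl y)) with (Rl (vsub x y)). apply Rl_N2.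
  unfold Refl, Rl; destruct x, y, u, p0; unfold dot, vsub, vscale, N2; vext. all: unfold dot; simpl; unfold Rdiv; ring. Qed.

Lemma Rl_lin E1 E2 E3 x : Rl (lin E1 E2 E3 x) = lin (Rl E1) (Rl E2) (Rl E3) x.
Proof. unfold Rl, lin; destruct E1, E2, E3, x, u; unfold dot, vsub, vscale, vadd, N2; apply V3_ext; simpl; unfold dot; simpl; unfold Rdiv; ring. Qed.

Lemma Rl_scale k y : Rl (vscale k y) = vscale k (Rl y).
Proof. unfold Rl; destruct y, u; unfold dot, vsub, vscale, N2; apply V3_ext; simpl; unfold dot; simpl; unfold Rdiv; ring. Qed.

Lemma Rl_fix y : dot y u = 0 -> Rl y = y.
Proof. intros h; unfold Rl; rewrite h. destruct y, u; unfold vsub, vscale; apply V3_ext; simpl; unfold Rdiv; ring. Qed.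

Lemma Rl_cross a b : dot a u = 0 -> dot b u = 0 -> Rl (cross a b) = vscale (-1) (cross a b).
Proof. intros ha hb. assert (h := N2u_pos).
  assert (key : vsub (vscale (N2 u) (cross a b)) (vscale (dot (cross a b) u) u) =
     vsub (vscale (dot u a) (cross u b)) (vscale (dot u b) (cross u a))).
  { destruct a, b, u; unfold N2, dot, cross, vsub, vscale; vext. }
  rewrite (dot_comm u a), (dot_comm u b), ha, hb in key.
  unfold Rl. destruct (cross a b) as [x y z]. destruct u as [p q r].
  unfold N2, vsub, vscale, dot, cross in *; simpl in *. injection key; intros k3 k2 k1.
  apply V3_ext; simpl; field_simplify_eq; try lra.
Qed.

Lemma Rl_cross_gen a b : Rl (cross a b) = vscale (-1) (cross (Rl a) (Rl b)).
Proof. assert (h := N2u_pos). unfold Rl; destruct a, b, u; unfold N2, dot, cross, vsub, vscale in *; simpl in *.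
  vext; field; lra. Qed.

Lemma pl_frame s : inJ l s ->
  Rl (tangent c s) = tangent c s /\ Rl (binormal c s) = vscale (-1) (binormal c s) /\
  Rl (principal_normal c s) = principal_normal c s.
Proof. intros Hs.
  assert (ht : Rl (tangent c s) = tangent c s).
  { apply Rl_fix. rewrite (ac_tangent l c Hc s Hs). apply pl_d1; auto. }
  assert (hb : Rl (binormal c s) = vscale (-1) (binormal c s)).
  { unfold binormal. rewrite Rl_scale, Rl_cross, vscale_vscale, vscale_vscale. f_equal; ring.
    apply pl_d1; auto. apply pl_d2; auto. }
  split; auto. split; auto.
  unfold principal_normal. rewrite Rl_cross_gen, ht, hb, cross_scale_l, vscale_vscale. norm1. Qed.

Lemma pl_cot s : inJ l s -> cot_beta c (fun t => - alpha t) s = cot_beta c alpha s.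
Proof. intros Hs. unfold cot_beta. rewrite Derive_opp, pl_torsion, sin_neg by auto.
  replace (curvature c s * - sin (alpha s)) with (- (curvature c s * sin (alpha s))) by ring.
  unfold Rdiv. rewrite Rinv_opp. ring. Qed.

Lemma pl_xi s : inJ l s -> Rl (xi_nf c alpha s) = xi_nf c (fun t => - alpha t) s.
Proof. intros Hs. rewrite !xi_lin, Rl_lin. destruct (pl_frame s Hs) as (h1&h2&h3).
  rewrite h1, h2, h3. unfold beta_nf. rewrite pl_cot by auto.
  unfold lin, xcoef; simpl. rewrite cos_neg, sin_neg.
  destruct (tangent c s), (principal_normal c s), (binormal c s); vext. Qed.

Lemma planar_congruent : congruent_small l (normal_form c alpha) (dual_normal_form c alpha).
Proof. apply (congr_of l _ _ Refl (fun s => s)); auto using Refl_iso.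
  intros s v Hs. unfold dual_normal_form, normal_form. rewrite <- pl_xi by auto.
  assert (h := Hp s Hs).
  assert (e : dot (vsub (vadd (c s) (vscale v (xi_nf c alpha s))) p0) u =
              v * dot (xi_nf c alpha s) u).
  { transitivity (dot (vsub (c s) p0) u + v * dot (xi_nf c alpha s) u).
    destruct (c s), (xi_nf c alpha s), u, p0; unfold dot, vsub, vadd, vscale; simpl; ring.
    rewrite h; ring. }
  unfold Refl, Rl. rewrite e.
  destruct (c s), (xi_nf c alpha s), u; unfold dot, vsub, vadd, vscale, N2; apply V3_ext; simpl; unfold Rdiv; ring.
Qed.
End Planar.

Lemma aff_iso b E1 E2 E3 : orthonormal E1 E2 E3 -> isometry3 (aff b E1 E2 E3).
Proof. intros HO x y. rewrite !dist3_N2. f_equal.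
  replace (vsub (aff b E1 E2 E3 x) (aff b E1 E2 E3 y)) with (lin E1 E2 E3 (vsub x y)).
  unfold N2; apply dot_lin; auto.
  destruct x, y; unfold aff, lin, vsub; vext. Qed.

Lemma lin_lin E1 E2 E3 a b c x :
  lin E1 E2 E3 (lin a b c x) = lin (lin E1 E2 E3 a) (lin E1 E2 E3 b) (lin E1 E2 E3 c) x.
Proof. destruct a, b, c, x; unfold lin; vext. Qed.

Lemma aff_add b E1 E2 E3 x v y :
  aff b E1 E2 E3 (vadd x (vscale v y)) = vadd (aff b E1 E2 E3 x) (vscale v (lin E1 E2 E3 y)).
Proof. destruct x, y; unfold aff, lin; vext. Qed.

Section Sym.
Variables (l : R) (c : R -> V3) (alpha : R -> R) (b0 E1 E2 E3 : V3).
Hypothesis Hc : arclength_curve l c.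
Hypothesis Ha : smooth_fun alpha.
Hypothesis HO : orthonormal E1 E2 E3.
Hypothesis HD : det3 E1 E2 E3 = 1.
Hypothesis Hsym : forall s, inJ l s -> c (- s) = aff b0 E1 E2 E3 (c s).
Hypothesis Hal : forall s, inJ l s -> alpha (- s) = alpha s.

Let Hl := ac_l l c Hc.
Let Hcs := ac_smooth l c Hc.

Lemma sym_dalpha s : inJ l s -> Derive alpha (- s) = - Derive alpha s.
Proof. intros Hs.
  assert (e : Derive (fun t => alpha (- t)) s = Derive alpha s).
  { apply (eqJ_derive l); auto. apply (ex_derive_comp alpha Ropp). apply smooth_ex; auto.
    auto_derive; auto. apply smooth_ex; auto. }
  rewrite Derive_rev in e by (apply smooth_ex; auto). lra. Qed.

Lemma sym_cot s : inJ l s ->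
  cot_beta c (fun t => - alpha t) (- s) = - cot_beta c alpha s.
Proof. intros Hs. unfold cot_beta.
  rewrite Derive_opp, sym_dalpha by auto.
  rewrite (rev_torsion l c b0 E1 E2 E3 Hl Hcs HO Hsym s Hs), HD, Rmult_1_l.
  rewrite (rev_curvature l c b0 E1 E2 E3 Hl Hcs HO Hsym s Hs).
  rewrite Hal by auto. rewrite sin_neg.
  replace (curvature c s * - sin (alpha s)) with (- (curvature c s * sin (alpha s))) by ring.
  unfold Rdiv. rewrite Rinv_opp. ring. Qed.

Lemma sym_xi s : inJ l s ->
  xi_nf c (fun t => - alpha t) (- s) = lin E1 E2 E3 (xi_nf c alpha s).
Proof. intros Hs. rewrite !xi_lin.
  rewrite (rev_tangent l c b0 E1 E2 E3 Hl Hcs HO Hsym s Hs).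
  rewrite (rev_normal l c b0 E1 E2 E3 Hl Hcs HO Hsym s Hs).
  rewrite (rev_binormal l c b0 E1 E2 E3 Hl Hcs HO Hsym s Hs). rewrite HD.
  rewrite lin_lin. unfold beta_nf. rewrite sym_cot by auto. rewrite atan_opp, Hal by auto.
  replace (PI / 2 - - atan (cot_beta c alpha s)) with (PI - (PI / 2 - atan (cot_beta c alpha s))) by lra.
  set (B := PI / 2 - atan (cot_beta c alpha s)).
  unfold xcoef, lin. rewrite cos_minus, sin_minus, cos_PI, sin_PI, cos_neg, sin_neg.
  destruct (lin E1 E2 E3 (tangent c s)), (lin E1 E2 E3 (principal_normal c s)), (lin E1 E2 E3 (binormal c s)).
  vext. Qed.

Lemma sym_congruent : congruent_small l (normal_form c alpha) (dual_normal_form c alpha).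
Proof. apply (congr_of l _ _ (aff b0 E1 E2 E3) Ropp).
  apply aff_iso; auto. intros; apply inJ_opp; auto. intros; ring.
  intros s v Hs. unfold dual_normal_form, normal_form. rewrite sym_xi, Hsym by auto.
  apply aff_add. Qed.
End Sym.

Lemma smooth_cont (f : R -> R) (x : R) : smooth_fun f -> continuous f x.
Proof. intros H; exact (ex_derive_continuous f x (smooth_ex f x H)). Qed.

Definition vcont (p : R -> V3) x :=
  continuous (fun t => v1 (p t)) x /\ continuous (fun t => v2 (p t)) x /\ continuous (fun t => v3 (p t)) x.

Lemma vcont_smooth p x : vsmooth p -> vcont p x.
Proof. intros (h1&h2&h3); repeat split; apply smooth_cont; auto. Qed.

Ltac cont := repeat match goal with
 | |- continuous (fun t => @?A t + @?B t) _ => apply (continuous_plus A B)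
 | |- continuous (fun t => @?A t - @?B t) _ => apply (continuous_minus A B)
 | |- continuous (fun t => @?A t * @?B t) _ => apply (continuous_mult A B)
 | |- continuous (fun t => - @?A t) _ => apply (continuous_opp A)
 | |- continuous (fun t => sqrt (@?A t)) _ => apply (continuous_sqrt_comp A)
 | |- continuous (fun t => cos (@?A t)) _ => apply (continuous_cos_comp A)
 | |- continuous (fun t => sin (@?A t)) _ => apply (continuous_sin_comp A)
 | |- continuous (fun t => atan (@?A t)) _ => apply (continuous_atan_comp A)
 | |- continuous (fun _ => _) _ => apply continuous_const
 end.

Lemma cont_inv (f : R -> R) x : continuous f x -> f x <> 0 -> continuous (fun t => / f t) x.
Proof. intros; apply continuous_Rinv_comp; auto. Qed.

Lemma vcont_add p q x : vcont p x -> vcont q x -> vcont (fun t => vadd (p t) (q t)) x.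
Proof. intros (p1&p2&p3) (q1&q2&q3); unfold vadd; repeat split; simpl; cont; auto. Qed.

Lemma vcont_scale (k : R -> R) p x : continuous k x -> vcont p x -> vcont (fun t => vscale (k t) (p t)) x.
Proof. intros hk (p1&p2&p3); unfold vscale; repeat split; simpl; cont; auto. Qed.

Lemma vcont_cross p q x : vcont p x -> vcont q x -> vcont (fun t => cross (p t) (q t)) x.
Proof. intros (p1&p2&p3) (q1&q2&q3); unfold cross; repeat split; simpl; cont; auto. Qed.

Lemma cont_dot p q x : vcont p x -> vcont q x -> continuous (fun t => dot (p t) (q t)) x.
Proof. intros (p1&p2&p3) (q1&q2&q3); unfold dot; cont; auto. Qed.

Lemma cont_vnorm p x : vcont p x -> continuous (fun t => vnorm (p t)) x.
Proof. intros h; unfold vnorm; cont; apply cont_dot; auto. Qed.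

Lemma cont_det3 p q r x : vcont p x -> vcont q x -> vcont r x -> continuous (fun t => det3 (p t) (q t) (r t)) x.
Proof. intros; unfold det3; apply cont_dot; auto; apply vcont_cross; auto. Qed.

Lemma cont_pow2 (f : R -> R) x : continuous f x -> continuous (fun t => f t ^ 2) x.
Proof. intros h; apply (continuous_ext (fun t => f t * f t)); [intro t; simpl; ring|]; cont; auto. Qed.
Lemma cont_pow3 (f : R -> R) x : continuous f x -> continuous (fun t => f t ^ 3) x.
Proof. intros h; apply (continuous_ext (fun t => f t * (f t * f t))); [intro t; simpl; ring|]; cont; auto. Qed.

Section XiCont.
Variables (l : R) (c : R -> V3) (alpha : R -> R) (x : R).
Hypothesis Hc : arclength_curve l c.
Hypothesis Ha : smooth_fun alpha.
Hypothesis Hx : inJ l x.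
Hypothesis Hsin : sin (alpha x) <> 0.

Let Hcs := ac_smooth l c Hc.
Lemma vc1 : vcont (Defs.d1 c) x. Proof. apply vcont_smooth, vsmooth_vder, Hcs. Qed.
Lemma vc2 : vcont (Defs.d2 c) x. Proof. apply vcont_smooth, vsmooth_vder, vsmooth_vder, Hcs. Qed.
Lemma vc3 : vcont (Defs.d3 c) x. Proof. apply vcont_smooth, vsmooth_vder, vsmooth_vder, vsmooth_vder, Hcs. Qed.

Lemma nz_d1 : vnorm (Defs.d1 c x) <> 0.
Proof. rewrite (ac_vnorm1 l c Hc x Hx); lra. Qed.
Lemma nz_cross : vnorm (cross (Defs.d1 c x) (Defs.d2 c x)) <> 0.
Proof. apply Rgt_not_eq, vnorm_pos, (ac_cross l c Hc x Hx). Qed.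

Lemma c_curv : continuous (curvature c) x.
Proof. unfold curvature. unfold Rdiv. apply (continuous_mult (fun t => vnorm (cross (Defs.d1 c t) (Defs.d2 c t))) (fun t => / vnorm (Defs.d1 c t) ^ 3)).
  apply cont_vnorm, vcont_cross; [apply vc1|apply vc2].
  apply cont_inv. apply cont_pow3, cont_vnorm, vc1. apply pow_nonzero, nz_d1. Qed.

Lemma c_tors : continuous (torsion c) x.
Proof. unfold torsion. unfold Rdiv. apply (continuous_mult (fun t => det3 (Defs.d1 c t) (Defs.d2 c t) (Defs.d3 c t)) (fun t => / vnorm (cross (Defs.d1 c t) (Defs.d2 c t)) ^ 2)).
  apply cont_det3; [apply vc1|apply vc2|apply vc3].
  apply cont_inv. apply cont_pow2, cont_vnorm, vcont_cross; [apply vc1|apply vc2]. apply pow_nonzero, nz_cross. Qed.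

Lemma vc_tangent : vcont (tangent c) x.
Proof. unfold tangent. apply (vcont_scale (fun t => / vnorm (Defs.d1 c t)) (Defs.d1 c)).
  apply cont_inv. apply cont_vnorm, vc1. apply nz_d1. apply vc1. Qed.

Lemma vc_binormal : vcont (binormal c) x.
Proof. unfold binormal. apply (vcont_scale (fun t => / vnorm (cross (Defs.d1 c t) (Defs.d2 c t))) (fun t => cross (Defs.d1 c t) (Defs.d2 c t))).
  apply cont_inv. apply cont_vnorm, vcont_cross; [apply vc1|apply vc2]. apply nz_cross.
  apply vcont_cross; [apply vc1|apply vc2]. Qed.

Lemma vc_normal : vcont (principal_normal c) x.
Proof. unfold principal_normal. apply (vcont_cross (binormal c) (tangent c)); [apply vc_binormal|apply vc_tangent]. Qed.

Lemma c_alpha : continuous alpha x. Proof. apply smooth_cont; auto. Qed.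

Lemma c_cot : continuous (cot_beta c alpha) x.
Proof. unfold cot_beta, Rdiv.
  apply (continuous_mult (fun t => Derive alpha t + torsion c t) (fun t => / (curvature c t * sin (alpha t)))).
  apply (continuous_plus (Derive alpha) (torsion c)). apply smooth_cont, smooth_Derive; auto. apply c_tors.
  apply cont_inv. apply (continuous_mult (curvature c) (fun t => sin (alpha t))). apply c_curv.
  apply (continuous_sin_comp alpha), c_alpha.
  apply Rmult_integral_contrapositive; split; auto. apply Rgt_not_eq, (ac_curv l c Hc x Hx). Qed.

Lemma vc_xi : vcont (xi_nf c alpha) x.
Proof. unfold xi_nf.
  assert (hb : continuous (beta_nf c alpha) x).
  { unfold beta_nf. apply (continuous_minus (fun _ => PI / 2) (fun t => atan (cot_beta c alpha t))).
    apply continuous_const. apply (continuous_atan_comp (cot_beta c alpha)), c_cot. }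
  apply (vcont_add (fun t => vscale (cos (beta_nf c alpha t)) (tangent c t))).
  apply (vcont_scale (fun t => cos (beta_nf c alpha t))). apply (continuous_cos_comp (beta_nf c alpha)), hb. apply vc_tangent.
  apply (vcont_scale (fun t => sin (beta_nf c alpha t))). apply (continuous_sin_comp (beta_nf c alpha)), hb.
  apply (vcont_add (fun t => vscale (cos (alpha t)) (principal_normal c t))).
  apply (vcont_scale (fun t => cos (alpha t))). apply (continuous_cos_comp alpha), c_alpha. apply vc_normal.
  apply (vcont_scale (fun t => sin (alpha t))). apply (continuous_sin_comp alpha), c_alpha. apply vc_binormal.
Qed.
End XiCont.

Lemma Rabs_le_inv2 a b : Rabs a <= b -> - b <= a <= b.
Proof. unfold Rabs; destruct Rcase_abs; lra. Qed.

Lemma cont_eps (f : R -> R) x : continuous f x ->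
  forall eps, 0 < eps -> exists del, 0 < del /\ forall y, Rabs (y - x) < del -> Rabs (f y - f x) < eps.
Proof. intros H eps He. apply continuity_pt_filterlim in H.
  destruct (H eps He) as [a [Ha Hd]]. exists a; split; auto. intros y Hy.
  destruct (Req_dec y x) as [->|hn]. rewrite Rminus_diag, Rabs_R0; lra.
  apply (Hd y); split; [split; [exact I| auto]|]. exact Hy. Qed.

Lemma cont_pt (f : R -> R) x : continuous f x -> continuity_pt f x.
Proof. intros H; apply continuity_pt_filterlim; exact H. Qed.

Lemma diff_bound (f : R -> R) x : ex_derive f x ->
  forall eps, 0 < eps -> exists del, 0 < del /\ forall h, Rabs h < del ->
    Rabs (f (x + h) - f x - h * Derive f x) <= eps * Rabs h.
Proof. intros Hd eps He. assert (HD := Derive_correct f x Hd). apply is_derive_Reals in HD.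
  destruct (HD eps He) as [[d Hdp] Hd']. exists d; split; auto. intros h Hh.
  destruct (Req_dec h 0) as [->|hn].
  - rewrite Rplus_0_r, Rabs_R0. replace (f x - f x - 0 * Derive f x) with 0 by ring. rewrite Rabs_R0; lra.
  - specialize (Hd' h hn Hh). 
    replace (f (x + h) - f x - h * Derive f x) with (h * ((f (x + h) - f x) / h - Derive f x)) by (field; auto).
    rewrite Rabs_mult. rewrite Rmult_comm. apply Rmult_le_compat_r. apply Rabs_pos. lra. Qed.

Definition cbound (x : V3) (k : R) := Rabs (v1 x) <= k /\ Rabs (v2 x) <= k /\ Rabs (v3 x) <= k.

Lemma vdiff_bound p x : vsmooth p -> forall eps, 0 < eps -> exists del, 0 < del /\ forall h, Rabs h < del ->
  cbound (vsub (vsub (p (x + h)) (p x)) (vscale h (vder p x))) (eps * Rabs h).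
Proof. intros (h1&h2&h3) eps He.
  destruct (diff_bound _ x (smooth_ex _ x h1) eps He) as [d1' [D1 H1]].
  destruct (diff_bound _ x (smooth_ex _ x h2) eps He) as [d2' [D2 H2]].
  destruct (diff_bound _ x (smooth_ex _ x h3) eps He) as [d3' [D3 H3]].
  exists (Rmin d1' (Rmin d2' d3')). split. repeat apply Rmin_glb_lt; auto.
  intros h Hh. assert (a1 := Rmin_l d1' (Rmin d2' d3')). assert (a2 := Rmin_r d1' (Rmin d2' d3')).
  assert (a3 := Rmin_l d2' d3'). assert (a4 := Rmin_r d2' d3').
  unfold cbound, vsub, vscale, vder; simpl. repeat split; [apply H1|apply H2|apply H3]; lra. Qed.

Lemma comp_le1 x : N2 x = 1 -> cbound x 1.
Proof. destruct x as [a b c]; unfold N2, dot, cbound; simpl; intros H.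
  repeat split; apply Rabs_le; split; nra. Qed.

Lemma CS a b : dot a b ^ 2 <= N2 a * N2 b.
Proof. assert (h := N2_ge0 (cross a b)).
  assert (e : N2 a * N2 b - dot a b ^ 2 = N2 (cross a b)) by (destruct a, b; unfold N2, dot, cross; simpl; ring).
  lra. Qed.

Lemma dot_unit_le1 a b : N2 a = 1 -> N2 b = 1 -> Rabs (dot a b) <= 1.
Proof. intros ha hb. assert (h := CS a b). rewrite ha, hb in h. apply Rabs_le. split; nra. Qed.

Lemma dot_cbound x y k : cbound x k -> cbound y 1 -> Rabs (dot x y) <= 3 * k.
Proof. destruct x as [a b c], y as [p q r]; unfold cbound, dot; simpl. intros (h1&h2&h3) (g1&g2&g3).
  assert (forall u w k, Rabs u <= k -> Rabs w <= 1 -> Rabs (u * w) <= k).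
  { intros u w k0 hu hw. rewrite Rabs_mult. assert (0 <= Rabs u) by apply Rabs_pos. assert (0 <= Rabs w) by apply Rabs_pos. nra. }
  eapply Rle_trans. apply Rabs_triang. eapply Rle_trans. apply Rplus_le_compat_r, Rabs_triang.
  assert (Rabs (a*p) <= k) by auto. assert (Rabs (b*q) <= k) by auto. assert (Rabs (c*r) <= k) by auto. lra. Qed.

Lemma N2_sub_le a b : N2 (vsub a b) <= 2 * N2 a + 2 * N2 b.
Proof. assert (h := N2_ge0 (vadd a b)).
  assert (e : 2 * N2 a + 2 * N2 b - N2 (vsub a b) = N2 (vadd a b)) by (destruct a, b; unfold N2, dot, vsub, vadd; simpl; ring).
  lra. Qed.

Lemma N2_scale k a : N2 (vscale k a) = k ^ 2 * N2 a.
Proof. destruct a; unfold N2, dot, vscale; simpl; ring. Qed.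

Lemma cbound_N2 x k : cbound x k -> N2 x <= 3 * k ^ 2.
Proof. destruct x as [a b c]; unfold cbound, N2, dot; simpl. intros (h1&h2&h3).
  assert (a * a <= k ^ 2). { rewrite <- (Rabs_sqr a) || idtac. assert (0 <= Rabs a) by apply Rabs_pos.
    replace (a * a) with (Rabs a * Rabs a) by (rewrite <- Rabs_mult; apply Rabs_pos_eq; nra). nra. }
  assert (b * b <= k ^ 2). { assert (0 <= Rabs b) by apply Rabs_pos.
    replace (b * b) with (Rabs b * Rabs b) by (rewrite <- Rabs_mult; apply Rabs_pos_eq; nra). nra. }
  assert (c * c <= k ^ 2). { assert (0 <= Rabs c) by apply Rabs_pos.
    replace (c * c) with (Rabs c * Rabs c) by (rewrite <- Rabs_mult; apply Rabs_pos_eq; nra). nra. }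
  lra. Qed.

Lemma evt_pos (f : R -> R) a b : a <= b -> (forall x, a <= x <= b -> continuous f x) ->
  (forall x, a <= x <= b -> 0 < f x) -> exists m, 0 < m /\ forall x, a <= x <= b -> m <= f x.
Proof. intros Hab Hc Hp. destruct (continuity_ab_min f a b Hab) as [mx [H1 H2]].
  intros; apply cont_pt; auto. exists (f mx); split; auto. Qed.

Lemma vcont_sub p q x : vcont p x -> vcont q x -> vcont (fun t => vsub (p t) (q t)) x.
Proof. intros (p1&p2&p3) (q1&q2&q3); unfold vsub; repeat split; simpl; cont; auto. Qed.
Lemma vcont_const p x : vcont (fun _ => p) x.
Proof. repeat split; apply continuous_const. Qed.

Section Curve.
Variables (l : R) (c : R -> V3).
Hypothesis Hc : arclength_curve l c.
Let Hl := ac_l l c Hc.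
Let Hcs := ac_smooth l c Hc.

Lemma cont_N2c p x : continuous (fun t => N2 (vsub p (c t))) x.
Proof. unfold N2. apply cont_dot; apply vcont_sub; try apply vcont_const; apply vcont_smooth; auto. Qed.
Lemma cont_N2c' p x : continuous (fun t => N2 (vsub (c t) p)) x.
Proof. unfold N2. apply cont_dot; apply vcont_sub; try apply vcont_const; apply vcont_smooth; auto. Qed.

Lemma closed_C p : (forall eps, 0 < eps -> exists s, inJ l s /\ N2 (vsub p (c s)) < eps) ->
  exists s, inJ l s /\ p = c s.
Proof. intros H.
  destruct (continuity_ab_min (fun t => N2 (vsub p (c t))) (- l / 2) (l / 2)) as [mx [H1 H2]].
  lra. intros; apply cont_pt, cont_N2c.
  exists mx; split; [exact H2|].
  destruct (N2_ge0 (vsub p (c mx))) as [hp|h0].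
  - destruct (H _ hp) as [s [Hs Hs']]. specialize (H1 s Hs). lra.
  - symmetry in h0. apply N2_eq0 in h0. destruct p, (c mx); unfold vsub, v0 in h0; simpl in h0.
    injection h0; intros; vext; lra. Qed.

Lemma c_local s : inJ l s -> exists del, 0 < del /\ forall h, Rabs h < del ->
  h ^ 2 <= 4 * N2 (vsub (c (s + h)) (c s)) /\ N2 (vsub (c (s + h)) (c s)) <= 12 * h ^ 2.
Proof. intros Hs. destruct (vdiff_bound c s Hcs (1/6)) as [d [Hd Hb]]. lra.
  exists d; split; auto. intros h Hh. specialize (Hb h Hh).
  set (e := vder c s) in *. assert (He : N2 e = 1) by apply (ac_unit l c Hc s Hs).
  set (Rr := vsub (vsub (c (s + h)) (c s)) (vscale h e)) in *.
  assert (Eq : vsub (c (s + h)) (c s) = vadd (vscale h e) Rr) by (unfold Rr; destruct (c (s+h)), (c s), e; vext).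
  rewrite Eq. split.
  - assert (h1 := CS (vadd (vscale h e) Rr) e). rewrite He, Rmult_1_r in h1.
    assert (h2 : dot (vadd (vscale h e) Rr) e = h + dot Rr e).
    { transitivity (h * N2 e + dot Rr e). destruct Rr, e; unfold N2, dot, vadd, vscale; simpl; ring. rewrite He; ring. }
    assert (h3 := dot_cbound Rr e _ Hb (comp_le1 e He)).
    rewrite h2 in h1. apply Rabs_le_inv2 in h3. 
    destruct (Rle_dec 0 h).
    + rewrite Rabs_pos_eq in h3 by lra. nra.
    + rewrite Rabs_left in h3 by lra. nra.
  - assert (h1 := cbound_N2 Rr _ Hb). rewrite <- Rabs_sqr in h1 || idtac.
    assert (h4 : N2 (vadd (vscale h e) Rr) <= 2 * N2 (vscale h e) + 2 * N2 Rr).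
    { assert (hh := N2_ge0 (vsub (vscale h e) Rr)).
      assert (ee : 2 * N2 (vscale h e) + 2 * N2 Rr - N2 (vadd (vscale h e) Rr) = N2 (vsub (vscale h e) Rr))
        by (destruct Rr, e; unfold N2, dot, vsub, vadd, vscale; simpl; ring). lra. }
    rewrite N2_scale, He in h4.
    assert (h5 : (1/6 * Rabs h) ^ 2 = h ^ 2 / 36).
    { rewrite Rpow_mult_distr, pow2_abs. field. }
    rewrite h5 in h1. nra. Qed.

Lemma c_sep s del : inJ l s -> 0 < del -> exists m, 0 < m /\
  forall t, inJ l t -> del <= Rabs (t - s) -> m <= N2 (vsub (c t) (c s)).
Proof. intros Hs Hd.
  assert (pos : forall t, inJ l t -> del <= Rabs (t - s) -> 0 < N2 (vsub (c t) (c s))).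
  { intros t Ht Htd. destruct (N2_ge0 (vsub (c t) (c s))) as [h|h]; auto.
    symmetry in h; apply N2_eq0 in h.
    assert (c t = c s) by (destruct (c t), (c s); unfold vsub, v0 in h; simpl in h; injection h; intros; vext; lra).
    apply (ac_inj l c Hc) in H; auto. subst. rewrite Rminus_diag, Rabs_R0 in Htd; lra. }
  assert (left : exists m1, 0 < m1 /\ forall t, - l / 2 <= t <= s - del -> m1 <= N2 (vsub (c t) (c s))).
  { destruct (Rle_dec (- l / 2) (s - del)) as [hle|hgt].
    - apply evt_pos; auto. intros; apply cont_N2c'.
      intros t Ht. apply pos. unfold inJ in *; lra. rewrite Rabs_left1 by lra; lra.
    - exists 1; split; [lra|]; intros; lra. }
  assert (right : exists m2, 0 < m2 /\ forall t, s + del <= t <= l / 2 -> m2 <= N2 (vsub (c t) (c s))).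
  { destruct (Rle_dec (s + del) (l / 2)) as [hle|hgt].
    - apply evt_pos; auto. intros; apply cont_N2c'.
      intros t Ht. apply pos. unfold inJ in *; lra. rewrite Rabs_pos_eq by lra; lra.
    - exists 1; split; [lra|]; intros; lra. }
  destruct left as [m1 [Hm1 L1]], right as [m2 [Hm2 L2]].
  exists (Rmin m1 m2); split. apply Rmin_glb_lt; auto.
  intros t Ht Htd. unfold inJ in Ht. destruct (Rle_dec 0 (t - s)).
  - rewrite Rabs_pos_eq in Htd by lra. eapply Rle_trans. apply Rmin_r. apply L2; lra.
  - rewrite Rabs_left in Htd by lra. eapply Rle_trans. apply Rmin_l. apply L1; lra. Qed.

Lemma c_bilip s : inJ l s -> exists m, 0 < m /\
  forall t, inJ l t -> N2 (vsub (c t) (c s)) < m -> (t - s) ^ 2 <= 4 * N2 (vsub (c t) (c s)).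
Proof. intros Hs. destruct (c_local s Hs) as [d [Hd Hloc]].
  destruct (c_sep s d Hs Hd) as [m [Hm Hsep]].
  exists m; split; auto. intros t Ht Hn.
  destruct (Rlt_dec (Rabs (t - s)) d) as [hl|hg].
  - destruct (Hloc (t - s) hl) as [h1 _]. replace (s + (t - s)) with t in h1 by ring. exact h1.
  - specialize (Hsep t Ht ltac:(lra)). lra. Qed.
End Curve.

Definition clamp l x := Rmax (- l / 2) (Rmin x (l / 2)).
Lemma clamp_J l x : 0 < l -> inJ l (clamp l x).
Proof. intros Hl; unfold clamp, inJ, Rmax, Rmin; repeat destruct Rle_dec; lra. Qed.
Lemma clamp_id l x : inJ l x -> clamp l x = x.
Proof. unfold clamp, inJ, Rmax, Rmin; repeat destruct Rle_dec; lra. Qed.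
Lemma clamp_lip l x y : 0 < l -> Rabs (clamp l y - clamp l x) <= Rabs (y - x).
Proof. intros Hl; unfold clamp, Rmax, Rmin; repeat destruct Rle_dec; unfold Rabs; repeat destruct Rcase_abs; lra. Qed.

Lemma cbound_add a b k1 k2 : cbound a k1 -> cbound b k2 -> cbound (vadd a b) (k1 + k2).
Proof. destruct a, b; unfold cbound, vadd; simpl; intros (h1&h2&h3) (g1&g2&g3).
  repeat split; (eapply Rle_trans; [apply Rabs_triang|lra]). Qed.

Lemma cbound_lin E1 E2 E3 x k : orthonormal E1 E2 E3 -> cbound x k -> cbound (lin E1 E2 E3 x) (3 * k).
Proof. intros (o1&o2&o3&_) hx.
  assert (b1 := comp_le1 E1 o1). assert (b2 := comp_le1 E2 o2). assert (b3 := comp_le1 E3 o3).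
  assert (m : forall u w k0, Rabs u <= k0 -> Rabs w <= 1 -> Rabs (u * w) <= k0).
  { intros u w k0 hu hw. rewrite Rabs_mult. assert (0 <= Rabs u) by apply Rabs_pos. assert (0 <= Rabs w) by apply Rabs_pos. nra. }
  destruct x as [x1 x2 x3], E1 as [a1 a2 a3], E2 as [b1' b2' b3'], E3 as [c1 c2 c3].
  unfold cbound, lin, vadd, vscale in *; simpl in *.
  destruct hx as (h1&h2&h3). destruct b1 as (p1&p2&p3). destruct b2 as (q1&q2&q3). destruct b3 as (r1&r2&r3).
  repeat split; (eapply Rle_trans; [apply Rabs_triang|]); (eapply Rle_trans; [apply Rplus_le_compat_r, Rabs_triang|]);
  (assert (Rabs (x1 * _) <= k) by (apply m; auto)) || idtac;
  match goal with |- Rabs (?A * ?B) + Rabs (?C * ?D) + Rabs (?F * ?G) <= _ =>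
    assert (Rabs (A * B) <= k) by (apply m; auto); assert (Rabs (C * D) <= k) by (apply m; auto);
    assert (Rabs (F * G) <= k) by (apply m; auto); lra end. Qed.

Lemma cbound_neg x k : cbound x k -> cbound (vscale (-1) x) k.
Proof. destruct x; unfold cbound, vscale; simpl. rewrite !Rabs_mult, Rabs_m1, !Rmult_1_l; auto. Qed.

Lemma small_zero a K : 0 < K -> (forall eps, 0 < eps -> Rabs a <= K * eps) -> a = 0.
Proof. intros HK H. destruct (Req_dec a 0) as [|hn]; auto. exfalso.
  assert (ha := Rabs_pos_lt a hn). specialize (H (Rabs a / (2 * K))).
  assert (0 < Rabs a / (2 * K)) by (apply Rdiv_lt_0_compat; lra). specialize (H H0).
  replace (K * (Rabs a / (2 * K))) with (Rabs a / 2) in H by (field; lra). lra. Qed.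

Section Phi.
Variables (l : R) (c : R -> V3) (b0 E1 E2 E3 : V3).
Hypothesis Hc : arclength_curve l c.
Hypothesis HO : orthonormal E1 E2 E3.
Hypothesis Hmap : forall s, inJ l s -> exists t, inJ l t /\ aff b0 E1 E2 E3 (c s) = c t.
Let Hl := ac_l l c Hc.
Let Hcs := ac_smooth l c Hc.
Let T := aff b0 E1 E2 E3.

Lemma phi_ex x : exists t, inJ l t /\ T (c (clamp l x)) = c t.
Proof. apply Hmap, clamp_J, Hl. Qed.

Definition phi x := proj1_sig (constructive_indefinite_description _ (phi_ex x)).

Lemma phi_spec x : inJ l (phi x) /\ T (c (clamp l x)) = c (phi x).
Proof. unfold phi; destruct constructive_indefinite_description; auto. Qed.

Lemma phi_J x : inJ l (phi x). Proof. apply phi_spec. Qed.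
Lemma phi_eq s : inJ l s -> T (c s) = c (phi s).
Proof. intros Hs. rewrite <- (clamp_id l s Hs) at 1. apply phi_spec. Qed.

Lemma T_sub x y : vsub (T x) (T y) = lin E1 E2 E3 (vsub x y).
Proof. unfold T, aff, lin; destruct x, y; vext. Qed.

Lemma phi_N2 x y : N2 (vsub (c (phi y)) (c (phi x))) = N2 (vsub (c (clamp l y)) (c (clamp l x))).
Proof. destruct (phi_spec x) as [_ hx], (phi_spec y) as [_ hy]. rewrite <- hx, <- hy.
  fold T. rewrite T_sub. unfold N2; apply dot_lin; auto. Qed.

Lemma phi_cont_eps x eps : 0 < eps -> exists del, 0 < del /\
  forall y, Rabs (y - x) < del -> Rabs (phi y - phi x) < eps.
Proof. intros He. set (s := clamp l x). assert (Hs : inJ l s) by apply clamp_J, Hl.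
  destruct (c_bilip l c Hc (phi x) (phi_J x)) as [m [Hm Hb]].
  destruct (c_local l c Hc s Hs) as [d1' [Hd1 Hloc]].
  exists (Rmin d1' (Rmin 1 (Rmin (m / 24) (eps / 8)))).
  assert (a1 := Rmin_l d1' (Rmin 1 (Rmin (m / 24) (eps / 8)))).
  assert (a2 := Rmin_r d1' (Rmin 1 (Rmin (m / 24) (eps / 8)))).
  assert (a3 := Rmin_l 1 (Rmin (m / 24) (eps / 8))). assert (a4 := Rmin_r 1 (Rmin (m / 24) (eps / 8))).
  assert (a5 := Rmin_l (m / 24) (eps / 8)). assert (a6 := Rmin_r (m / 24) (eps / 8)).
  set (del := Rmin d1' (Rmin 1 (Rmin (m / 24) (eps / 8)))) in *.
  split. unfold del; repeat apply Rmin_glb_lt; lra.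
  intros y Hy. set (t := clamp l y). assert (Ht := clamp_lip l x y Hl). fold s t in Ht.
  set (h := t - s). assert (Hh : Rabs h < del) by (unfold h; lra).
  destruct (Hloc h ltac:(lra)) as [_ Hup]. replace (s + h) with t in Hup by (unfold h; ring).
  assert (Ha : Rabs h * Rabs h < del * del).
  { assert (0 <= Rabs h) by apply Rabs_pos. nra. }
  rewrite <- Rabs_mult, Rabs_pos_eq in Ha by nra. replace (h * h) with (h ^ 2) in Ha by ring.
  assert (Hdd : del * del <= del) by (assert (0 < del) by (unfold del; repeat apply Rmin_glb_lt; lra); nra).
  assert (Hn : N2 (vsub (c (phi y)) (c (phi x))) < m).
  { rewrite phi_N2. fold s t. lra. }
  specialize (Hb (phi y) (phi_J y) Hn). rewrite phi_N2 in Hb. fold s t in Hb.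
  assert (Hsq : (phi y - phi x) ^ 2 < eps ^ 2).
  { assert (del <= eps / 8) by lra. assert (0 < del) by (unfold del; repeat apply Rmin_glb_lt; lra). nra. }
  apply Rsqr_lt_abs_0 in Hsq || idtac.
  destruct (Rle_dec 0 (phi y - phi x)); [rewrite Rabs_pos_eq by lra|rewrite Rabs_left by lra]; nra. Qed.

Lemma phi_cont x : continuity_pt phi x.
Proof. intros eps He. destruct (phi_cont_eps x eps He) as [d [Hd H]].
  exists d; split; auto. intros y [_ Hy]. apply H. exact Hy. Qed.

Definition gphi x := dot (lin E1 E2 E3 (vder c x)) (vder c (phi x)).

Lemma phi_claim s : - l / 2 < s < l / 2 -> forall ep, 0 < ep -> exists del, 0 < del /\
  forall h, h <> 0 -> Rabs h < del ->
   Rabs (phi (s + h) - phi s - h * gphi s) <= 30 * ep * Rabs h /\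
   cbound (vsub (vscale h (lin E1 E2 E3 (vder c s))) (vscale (phi (s + h) - phi s) (vder c (phi s)))) (10 * ep * Rabs h).
Proof. intros Hs ep Hep. assert (HsJ : inJ l s) by (unfold inJ; lra).
  set (s' := phi s). assert (Hs' : inJ l s') by apply phi_J.
  set (e := vder c s'). set (d := vder c s). set (w := lin E1 E2 E3 d).
  assert (He : N2 e = 1) by apply (ac_unit l c Hc s' Hs').
  destruct (vdiff_bound c s' Hcs ep Hep) as [da [Hda Ba]].
  destruct (vdiff_bound c s Hcs ep Hep) as [db [Hdb Bb]].
  destruct (c_local l c Hc s HsJ) as [dc [Hdc Hloc]].
  destruct (c_bilip l c Hc s' Hs') as [m [Hm Hbl]].
  set (dd := Rmin (l / 2 - s) (s + l / 2)).
  assert (Hdd : 0 < dd) by (unfold dd; apply Rmin_glb_lt; lra).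
  set (del := Rmin (da / 7) (Rmin db (Rmin dc (Rmin dd (Rmin 1 (m / 24)))))).
  assert (q1 := Rmin_l (da / 7) (Rmin db (Rmin dc (Rmin dd (Rmin 1 (m / 24)))))).
  assert (q2 := Rmin_r (da / 7) (Rmin db (Rmin dc (Rmin dd (Rmin 1 (m / 24)))))).
  assert (q3 := Rmin_l db (Rmin dc (Rmin dd (Rmin 1 (m / 24))))).
  assert (q4 := Rmin_r db (Rmin dc (Rmin dd (Rmin 1 (m / 24))))).
  assert (q5 := Rmin_l dc (Rmin dd (Rmin 1 (m / 24)))).
  assert (q6 := Rmin_r dc (Rmin dd (Rmin 1 (m / 24)))).
  assert (q7 := Rmin_l dd (Rmin 1 (m / 24))). assert (q8 := Rmin_r dd (Rmin 1 (m / 24))).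
  assert (q9 := Rmin_l 1 (m / 24)). assert (q10 := Rmin_r 1 (m / 24)).
  assert (r1 := Rmin_l (l / 2 - s) (s + l / 2)). assert (r2 := Rmin_r (l / 2 - s) (s + l / 2)).
  assert (Hdel : 0 < del) by (unfold del; repeat apply Rmin_glb_lt; lra).
  fold del in q1, q2. fold dd in r1, r2. clearbody del dd.

  exists del; split; auto. intros h Hh0 Hh.
  assert (Hhb : - dd < h < dd).
  { assert (Rabs h < dd) by lra. revert H. unfold Rabs; destruct Rcase_abs; intros; lra. }
  set (t := s + h). assert (Ht : inJ l t) by (unfold t, inJ; lra).
  set (D := phi t - s').
  destruct (Hloc h ltac:(lra)) as [_ Hup]. fold t in Hup.
  assert (Hhd : h ^ 2 <= del) by (rewrite <- pow2_abs; assert (0 <= Rabs h) by apply Rabs_pos; nra).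
  assert (Hn : N2 (vsub (c (phi t)) (c s')) < m).
  { unfold s'; rewrite phi_N2, !clamp_id by auto. lra. }
  specialize (Hbl (phi t) (phi_J t) Hn). unfold s' in Hbl; rewrite phi_N2, !clamp_id in Hbl by auto. fold s' in Hbl.
  assert (HD : Rabs D <= 7 * Rabs h).
  { assert (D ^ 2 <= 49 * h ^ 2) by (unfold D; nra).
    assert (0 <= Rabs h) by apply Rabs_pos.
    rewrite <- (pow2_abs D), <- (pow2_abs h) in H. assert (0 <= Rabs D) by apply Rabs_pos. nra. }
  specialize (Ba D ltac:(lra)). replace (s' + D) with (phi t) in Ba by (unfold D; ring). fold e in Ba.
  specialize (Bb h ltac:(lra)). fold t d in Bb.
  set (R1 := vsub (vsub (c (phi t)) (c s')) (vscale D e)) in *.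
  set (R2 := vsub (vsub (c t) (c s)) (vscale h d)) in *.
  assert (Id : vadd (vscale D e) R1 = vadd (vscale h w) (lin E1 E2 E3 R2)).
  { assert (X : vsub (c (phi t)) (c s') = lin E1 E2 E3 (vsub (c t) (c s))).
    { unfold s'. rewrite <- (phi_eq t), <- (phi_eq s) by auto. apply T_sub. }
    unfold R1, R2, w. rewrite <- lin_lin_sub || idtac.
    transitivity (vsub (c (phi t)) (c s')). unfold R1; destruct (c (phi t)), (c s'), e; vext.
    rewrite X. unfold lin; destruct (c t), (c s), d; vext. }
  assert (BR1 : cbound R1 (7 * ep * Rabs h)).
  { destruct Ba as (a1&a2&a3). assert (ep * Rabs D <= 7 * ep * Rabs h) by nra. repeat split; lra. }
  assert (BR2 : cbound (lin E1 E2 E3 R2) (3 * (ep * Rabs h))) by (apply cbound_lin; auto).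
  split.
  - assert (Ed : D + dot R1 e = h * gphi s + dot (lin E1 E2 E3 R2) e).
    { assert (Hd2 := f_equal (fun z => dot z e) Id). simpl in Hd2.
      unfold gphi. fold d s' e w.
      replace (D + dot R1 e) with (dot (vadd (vscale D e) R1) e).
      rewrite Hd2. destruct w, (lin E1 E2 E3 R2), e; unfold dot, vadd, vscale; simpl; ring.
      transitivity (D * N2 e + dot R1 e). destruct R1, e; unfold N2, dot, vadd, vscale; simpl; ring.
      rewrite He; ring. }
    assert (b1 := dot_cbound R1 e _ BR1 (comp_le1 e He)).
    assert (b2 := dot_cbound _ e _ BR2 (comp_le1 e He)).
    assert (Hf : Rabs (D - h * gphi s) <= 30 * ep * Rabs h).
    { replace (D - h * gphi s) with (dot (lin E1 E2 E3 R2) e - dot R1 e) by lra.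
      eapply Rle_trans. apply Rabs_triang. rewrite Rabs_Ropp. nra. }
    exact Hf.
  - assert (Hv : vsub (vscale h w) (vscale D e) = vadd R1 (vscale (-1) (lin E1 E2 E3 R2))).
    { assert (I1 := f_equal v1 Id). assert (I2 := f_equal v2 Id). assert (I3 := f_equal v3 Id).
      simpl in I1, I2, I3. apply V3_ext; simpl; lra. }
    change (cbound (vsub (vscale h w) (vscale D e)) (10 * ep * Rabs h)). rewrite Hv.
    replace (10 * ep * Rabs h) with (7 * ep * Rabs h + 3 * (ep * Rabs h)) by ring.
    apply cbound_add; auto. apply cbound_neg; auto.
Qed.

Lemma phi_deriv s : - l / 2 < s < l / 2 -> derivable_pt_lim phi s (gphi s).
Proof. intros Hs eps He. destruct (phi_claim s Hs (eps / 60)) as [d [Hd H]]. lra.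
  exists (mkposreal d Hd). intros h Hh0 Hh. simpl in Hh. destruct (H h Hh0 Hh) as [H1 _].
  replace ((phi (s + h) - phi s) / h - gphi s) with ((phi (s + h) - phi s - h * gphi s) / h) by (field; auto).
  unfold Rdiv. rewrite Rabs_mult, Rabs_inv. apply Rabs_pos_lt in Hh0.
  apply (Rmult_lt_reg_r (Rabs h)); auto. rewrite Rmult_assoc, Rinv_l, Rmult_1_r by lra. nra. Qed.

Lemma phi_g2 s : - l / 2 < s < l / 2 -> gphi s ^ 2 = 1.
Proof. intros Hs. assert (HsJ : inJ l s) by (unfold inJ; lra).
  set (w := lin E1 E2 E3 (vder c s)). set (e := vder c (phi s)).
  assert (He : N2 e = 1) by apply (ac_unit l c Hc _ (phi_J s)).
  assert (Hw : N2 w = 1) by (unfold w, N2; rewrite dot_lin by auto; apply (ac_unit l c Hc s HsJ)).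
  assert (key : forall ep, 0 < ep -> cbound (vsub w (vscale (gphi s) e)) (40 * ep)).
  { intros ep Hep. destruct (phi_claim s Hs ep Hep) as [d [Hd H]].
    set (h := d / 2). assert (Hh0 : h <> 0) by (unfold h; lra).
    assert (Hh : Rabs h < d) by (unfold h; rewrite Rabs_pos_eq; lra).
    destruct (H h Hh0 Hh) as [H1 H2]. fold w e in H2.
    set (D := phi (s + h) - phi s) in *.
    assert (Hhp : 0 < Rabs h) by (apply Rabs_pos_lt; auto).
    assert (Eq : vsub w (vscale (gphi s) e) =
       vadd (vscale (/ h) (vsub (vscale h w) (vscale D e))) (vscale ((D - h * gphi s) / h) e)).
    { destruct w, e; apply V3_ext; simpl; field; auto. }
    rewrite Eq. replace (40 * ep) with (10 * ep + 30 * ep) by ring. apply cbound_add.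
    - destruct (vsub (vscale h w) (vscale D e)) as [x y z]; unfold cbound, vscale in *; simpl in *.
      destruct H2 as (a1&a2&a3). rewrite !Rabs_mult, Rabs_inv.
      repeat split; apply (Rmult_le_reg_l (Rabs h)); auto; rewrite <- Rmult_assoc, Rinv_r by lra; lra.
    - assert (Hc1 := comp_le1 e He). destruct e as [x y z]; unfold cbound, vscale in *; simpl in *.
      destruct Hc1 as (a1&a2&a3).
      assert (Hq : Rabs ((D - h * gphi s) / h) <= 30 * ep).
      { unfold Rdiv; rewrite Rabs_mult, Rabs_inv. apply (Rmult_le_reg_l (Rabs h)); auto.
        rewrite <- Rmult_assoc, (Rmult_comm (Rabs h)), Rmult_assoc, Rinv_r, Rmult_1_r by lra. nra. }
      assert (0 <= Rabs ((D - h * gphi s) / h)) by apply Rabs_pos.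
      rewrite !Rabs_mult. repeat split; nra. }
  assert (Z : vsub w (vscale (gphi s) e) = v0).
  { assert (z1 : v1 (vsub w (vscale (gphi s) e)) = 0).
    { apply (small_zero _ 40); [lra|]. intros ep Hep. apply (key ep Hep). }
    assert (z2 : v2 (vsub w (vscale (gphi s) e)) = 0).
    { apply (small_zero _ 40); [lra|]. intros ep Hep. apply (key ep Hep). }
    assert (z3 : v3 (vsub w (vscale (gphi s) e)) = 0).
    { apply (small_zero _ 40); [lra|]. intros ep Hep. apply (key ep Hep). }
    destruct (vsub w (vscale (gphi s) e)); simpl in *; subst; reflexivity. }
  assert (W : w = vscale (gphi s) e).
  { destruct w, e; unfold vsub, vscale, v0 in Z; simpl in Z; injection Z; intros; vext; lra. }
  rewrite W, N2_scale, He in Hw. lra. Qed.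

Lemma phi_iso a b : inJ l a -> inJ l b -> Rabs (phi b - phi a) = Rabs (b - a).
Proof. intros Ha Hb.
  set (df x := if Rlt_dec (- l / 2) x then if Rlt_dec x (l / 2) then gphi x else 1 else 1).
  destruct (MVT_gen phi a b df) as [x [Hx Hm]].
  - intros x Hx. unfold inJ, Rmin, Rmax in *. 
    assert (Hi : - l / 2 < x < l / 2) by (destruct Rle_dec; lra).
    unfold df. destruct Rlt_dec; [|lra]. destruct Rlt_dec; [|lra].
    apply is_derive_Reals, phi_deriv; auto.
  - intros; apply phi_cont.
  - rewrite Hm, Rabs_mult.
    assert (Rabs (df x) = 1).
    { unfold df. destruct Rlt_dec; [destruct Rlt_dec|].
      - assert (h := phi_g2 x ltac:(lra)). rewrite <- pow2_abs in h.
        assert (0 <= Rabs (gphi x)) by apply Rabs_pos. nra.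
      - apply Rabs_R1.
      - apply Rabs_R1. }
    rewrite H; ring. Qed.

Lemma phi_pm : (forall s, inJ l s -> phi s = s) \/ (forall s, inJ l s -> phi s = - s).
Proof. assert (Hl0 : 0 < l) by exact Hl. clearbody Hl Hcs T.
  assert (HA : inJ l (- l / 2)) by (unfold inJ; lra). assert (HB : inJ l (l / 2)) by (unfold inJ; lra).
  assert (I1 := phi_iso _ _ HA HB). assert (J1 := phi_J (- l / 2)). assert (J2 := phi_J (l / 2)).
  replace (l / 2 - - l / 2) with l in I1 by field. rewrite (Rabs_pos_eq l) in I1 by lra.
  unfold inJ in J1, J2.
  assert (C : (phi (- l / 2) = - l / 2 /\ phi (l / 2) = l / 2) \/ (phi (- l / 2) = l / 2 /\ phi (l / 2) = - l / 2)).
  { revert I1; unfold Rabs; destruct Rcase_abs; intros; [right|left]; lra. }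
  destruct C as [[c1 c2]|[c1 c2]]; [left|right]; intros s Hs;
  assert (K1 := phi_iso _ _ HA Hs); assert (K2 := phi_iso _ _ Hs HB); assert (J3 := phi_J s);
  unfold inJ in *; rewrite c1 in K1; rewrite c2 in K2;
  revert K1 K2; unfold Rabs; repeat destruct Rcase_abs; intros; lra. Qed.

Lemma curve_pm : (forall s, inJ l s -> aff b0 E1 E2 E3 (c s) = c s) \/
                 (forall s, inJ l s -> aff b0 E1 E2 E3 (c s) = c (- s)).
Proof. destruct phi_pm as [H|H]; [left|right]; intros s Hs; fold T; rewrite phi_eq, H; auto. Qed.
End Phi.

Lemma cbound_nonneg x k : cbound x k -> 0 <= k.
Proof. intros (h&_); assert (0 <= Rabs (v1 x)) by apply Rabs_pos; lra. Qed.

Lemma det_cb x e f k : cbound x k -> N2 e = 1 -> N2 f = 1 -> Rabs (det3 x e f) <= 2 * k.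
Proof. intros Hx He Hf. assert (Hk := cbound_nonneg x k Hx).
  assert (h1 := CS x (cross e f)). assert (h2 := cbound_N2 x k Hx).
  assert (h3 : N2 (cross e f) <= 1).
  { assert (e0 : N2 (cross e f) = N2 e * N2 f - dot e f ^ 2) by (destruct e, f; unfold N2, dot, cross; simpl; ring).
    rewrite e0, He, Hf. assert (0 <= dot e f ^ 2) by (apply pow2_ge_0). lra. }
  assert (h4 : det3 x e f ^ 2 <= 3 * k ^ 2).
  { unfold det3. assert (0 <= N2 x) by apply N2_ge0. assert (0 <= N2 (cross e f)) by apply N2_ge0. nra. }
  rewrite <- pow2_abs in h4. assert (0 <= Rabs (det3 x e f)) by apply Rabs_pos. nra. Qed.

Lemma cont_vcb p x : vcont p x -> forall ep, 0 < ep -> exists del, 0 < del /\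
  forall y, Rabs (y - x) < del -> cbound (vsub (p y) (p x)) ep.
Proof. intros (c1&c2&c3) ep Hep.
  destruct (cont_eps _ _ c1 ep Hep) as [a [Ha Ba]].
  destruct (cont_eps _ _ c2 ep Hep) as [b [Hb Bb]].
  destruct (cont_eps _ _ c3 ep Hep) as [d [Hd Bd]].
  exists (Rmin a (Rmin b d)). split. repeat apply Rmin_glb_lt; auto.
  intros y Hy. assert (q1 := Rmin_l a (Rmin b d)). assert (q2 := Rmin_r a (Rmin b d)).
  assert (q3 := Rmin_l b d). assert (q4 := Rmin_r b d).
  unfold cbound, vsub; simpl. repeat split; [left; apply Ba|left; apply Bb|left; apply Bd]; lra. Qed.

Section Tan.
Variables (l : R) (c : R -> V3) (alpha : R -> R) (b0 E1 E2 E3 : V3) (eps0 : R).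
Hypothesis Hc : arclength_curve l c.
Hypothesis Ha : smooth_fun alpha.
Hypothesis Hal : forall s, inJ l s -> 0 < Rabs (alpha s) < PI / 2.
Hypothesis HO : orthonormal E1 E2 E3.
Hypothesis He0 : 0 < eps0.
Hypothesis Hcong : forall eps, 0 < eps < eps0 -> forall p,
  (exists q, image_Omega l eps (normal_form c alpha) q /\ p = aff b0 E1 E2 E3 q) <->
  image_Omega l eps (dual_normal_form c alpha) p.

Let alpha' := fun t => - alpha t.

Lemma sin_alpha_nz s : inJ l s -> sin (alpha s) <> 0.
Proof. intros Hs. specialize (Hal s Hs). intro H.
  destruct (Rle_dec 0 (alpha s)).
  - rewrite Rabs_pos_eq in Hal by lra. assert (0 < sin (alpha s)) by (apply sin_gt_0; lra). lra.
  - rewrite Rabs_left in Hal by lra. assert (sin (alpha s) < 0).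
    { rewrite <- (Ropp_involutive (alpha s)), sin_neg. assert (0 < sin (- alpha s)) by (apply sin_gt_0; lra). lra. }
    lra. Qed.

Lemma tangent_det s s' : inJ l s -> inJ l s' -> aff b0 E1 E2 E3 (c s) = c s' ->
  det3 (lin E1 E2 E3 (xi_nf c alpha s)) (vder c s') (xi_nf c alpha' s') = 0.
Proof. intros Hs Hs' Hss.
  set (Lx := lin E1 E2 E3 (xi_nf c alpha s)). set (e := vder c s'). set (X0 := xi_nf c alpha' s').
  set (D0 := det3 Lx e X0).
  destruct (Req_dec D0 0) as [|HD]; auto. exfalso.
  set (eta := Rabs D0). assert (Heta : 0 < eta) by (apply Rabs_pos_lt; auto).
  assert (NLx : N2 Lx = 1) by (unfold Lx, N2; rewrite dot_lin by auto; apply (xi_unit l); auto).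
  assert (Ne : N2 e = 1) by apply (ac_unit l c Hc s' Hs').
  assert (NX : forall t, inJ l t -> N2 (xi_nf c alpha' t) = 1) by (intros; apply (xi_unit l); auto).
  assert (Ha' : smooth_fun alpha') by (apply smooth_opp; auto).
  assert (Hsin' : sin (alpha' s') <> 0) by (unfold alpha'; rewrite sin_neg; intro h; apply (sin_alpha_nz s' Hs'); lra).
  destruct (vdiff_bound c s' (ac_smooth l c Hc) (eta / 56)) as [d1' [Hd1 B1]]. lra.
  destruct (cont_vcb _ _ (vc_xi l c alpha' s' Hc Ha' Hs' Hsin') (eta / 16)) as [d2' [Hd2 B2]]. lra.
  destruct (c_bilip l c Hc s' Hs') as [m [Hm Hbl]].
  set (v := Rmin (eps0 / 4) (Rmin (d1' / 8) (Rmin (d2' / 8) (Rmin 1 (m / 20))))).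
  assert (q1 := Rmin_l (eps0 / 4) (Rmin (d1' / 8) (Rmin (d2' / 8) (Rmin 1 (m / 20))))).
  assert (q2 := Rmin_r (eps0 / 4) (Rmin (d1' / 8) (Rmin (d2' / 8) (Rmin 1 (m / 20))))).
  assert (q3 := Rmin_l (d1' / 8) (Rmin (d2' / 8) (Rmin 1 (m / 20)))).
  assert (q4 := Rmin_r (d1' / 8) (Rmin (d2' / 8) (Rmin 1 (m / 20)))).
  assert (q5 := Rmin_l (d2' / 8) (Rmin 1 (m / 20))). assert (q6 := Rmin_r (d2' / 8) (Rmin 1 (m / 20))).
  assert (q7 := Rmin_l 1 (m / 20)). assert (q8 := Rmin_r 1 (m / 20)).
  assert (Hv : 0 < v) by (unfold v; repeat apply Rmin_glb_lt; lra).
  fold v in q1, q2. clearbody v.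
  assert (Hin : image_Omega l (2 * v) (dual_normal_form c alpha) (aff b0 E1 E2 E3 (normal_form c alpha s v))).
  { apply (Hcong (2 * v)). lra. exists (normal_form c alpha s v). split; auto.
    exists s, v. split; [split; auto; split; lra | reflexivity]. }
  destruct Hin as (sg & w & ((Hsg & Hw) & Hp)).
  unfold normal_form, dual_normal_form in Hp. rewrite aff_add, Hss in Hp. fold Lx alpha' in Hp.
  set (Xs := xi_nf c alpha' sg) in *.
  assert (Hdiff : vsub (c sg) (c s') = vsub (vscale v Lx) (vscale w Xs)).
  { assert (P1 := f_equal v1 Hp). assert (P2 := f_equal v2 Hp). assert (P3 := f_equal v3 Hp).
    simpl in P1, P2, P3. apply V3_ext; simpl; lra. }
  assert (HN : N2 (vsub (c sg) (c s')) <= 10 * v ^ 2).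
  { rewrite Hdiff. eapply Rle_trans. apply N2_sub_le. assert (NXs : N2 Xs = 1) by (apply NX; auto). rewrite !N2_scale, NLx, NXs.
    assert (w ^ 2 <= 4 * v ^ 2) by (assert (Rabs w < 2 * v) by (unfold Rabs; destruct Rcase_abs; lra);
       rewrite <- (pow2_abs w); assert (0 <= Rabs w) by apply Rabs_pos; nra). lra. }
  assert (Hv1 : v <= 1) by lra. assert (Hvm : v <= m / 20) by lra.
  assert (Hm' : N2 (vsub (c sg) (c s')) < m) by (assert (v * v <= v * 1) by (apply Rmult_le_compat_l; lra); nra).
  specialize (Hbl sg Hsg Hm').
  assert (Hh : Rabs (sg - s') <= 7 * v).
  { assert ((sg - s') ^ 2 <= 49 * v ^ 2) by nra. rewrite <- pow2_abs in H.
    assert (0 <= Rabs (sg - s')) by apply Rabs_pos. nra. }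
  specialize (B1 (sg - s') ltac:(lra)). replace (s' + (sg - s')) with sg in B1 by ring. fold e in B1.
  specialize (B2 sg ltac:(lra)). fold Xs X0 in B2.
  set (R1 := vsub (vsub (c sg) (c s')) (vscale (sg - s') e)) in *.
  set (Y := vsub Xs X0) in *.
  assert (Eq : v * D0 = det3 R1 e X0 + w * det3 Y e X0).
  { unfold D0.
    transitivity (det3 (vsub (c sg) (c s')) e X0 + w * det3 Xs e X0).
    - rewrite Hdiff. destruct Lx, Xs, e, X0; unfold det3, dot, cross, vsub, vscale; simpl; ring.
    - unfold R1, Y. destruct (c sg), (c s'), Xs, e, X0; unfold det3, dot, cross, vsub, vscale; simpl; ring. }
  assert (b1 := det_cb R1 e X0 _ B1 Ne (NX s' Hs')).
  assert (b2 := det_cb Y e X0 _ B2 Ne (NX s' Hs')).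
  assert (Hw' : Rabs w <= 2 * v) by (unfold Rabs; destruct Rcase_abs; lra).
  assert (Rabs (v * D0) <= eta * v / 2).
  { rewrite Eq. eapply Rle_trans. apply Rabs_triang. rewrite Rabs_mult.
    assert (0 <= Rabs (det3 Y e X0)) by apply Rabs_pos. assert (0 <= Rabs w) by apply Rabs_pos.
    assert (0 <= Rabs (sg - s')) by apply Rabs_pos. nra. }
  rewrite Rabs_mult, (Rabs_pos_eq v) in H by lra. fold eta in H. nra.
Qed.
End Tan.

Lemma cross_par a x y : a <> v0 -> cross a x = v0 -> cross a y = v0 -> cross x y = v0.
Proof. intros Ha Hx Hy.
  assert (Hn : 0 < N2 a) by (destruct (N2_ge0 a) as [h|h]; auto; exfalso; apply Ha, N2_eq0; auto).
  assert (ix : vscale (N2 a) x = vscale (dot a x) a).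
  { assert (k : vsub (vscale (N2 a) x) (vscale (dot a x) a) = vscale (-1) (cross a (cross a x)))
      by (destruct a, x; unfold N2, dot, cross, vsub, vscale; vext).
    rewrite Hx in k. destruct a, x; unfold N2, dot, vsub, vscale, v0, cross in *; simpl in *.
    injection k; intros; vext; lra. }
  assert (iy : vscale (N2 a) y = vscale (dot a y) a).
  { assert (k : vsub (vscale (N2 a) y) (vscale (dot a y) a) = vscale (-1) (cross a (cross a y)))
      by (destruct a, y; unfold N2, dot, cross, vsub, vscale; vext).
    rewrite Hy in k. destruct a, y; unfold N2, dot, vsub, vscale, v0, cross in *; simpl in *.
    injection k; intros; vext; lra. }
  assert (k2 : vscale (N2 a * N2 a) (cross x y) = v0).
  { transitivity (cross (vscale (N2 a) x) (vscale (N2 a) y)).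
    destruct x, y; unfold cross, vscale; vext. rewrite ix, iy. destruct a; unfold cross, vscale, v0; vext. }
  destruct (cross x y) as [p q r]. unfold vscale, v0 in k2; injection k2; intros.
  assert (N2 a * N2 a <> 0) by nra.
  unfold v0; f_equal; [apply (Rmult_eq_reg_l (N2 a * N2 a))|apply (Rmult_eq_reg_l (N2 a * N2 a))|apply (Rmult_eq_reg_l (N2 a * N2 a))]; auto; lra. Qed.

Lemma vsmooth_const p : vsmooth (fun _ => p).
Proof. repeat split; apply smooth_const. Qed.
Lemma vder_const p s : vder (fun _ => p) s = v0.
Proof. unfold vder, v0; simpl. rewrite !Derive_const; auto. Qed.

Definition crossE (a : V3) := (cross a e1, cross a e2, cross a e3).

Lemma cross_lin_a a x : cross a x = lin (cross a e1) (cross a e2) (cross a e3) x.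
Proof. destruct a, x; unfold lin, cross, e1, e2, e3; vext. Qed.

Section NP.
Variables (l : R) (c : R -> V3).
Hypothesis Hc : arclength_curve l c.
Let Hl := ac_l l c Hc.
Let Hcs := ac_smooth l c Hc.

Lemma line_curv a : a <> v0 -> (forall s, inJ l s -> cross a (vsub (c s) (c (- l / 2))) = v0) -> False.
Proof. intros Ha H. set (s0 := - l / 2) in *.
  set (La := lin (cross a e1) (cross a e2) (cross a e3)).
  assert (Hq : forall s, inJ l s -> cross a (Defs.d1 c s) = v0).
  { intros s Hs.
    assert (E : vder (fun t => aff (vscale (-1) (cross a (c s0))) (cross a e1) (cross a e2) (cross a e3) (c t)) s
              = vder (fun _ => v0) s).
    { apply (vder_eqJ l); auto. apply vsmooth_aff; auto. apply vsmooth_const.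
      intros t Ht. rewrite <- (H t Ht). destruct a, (c t), (c s0); unfold aff, lin, cross, vsub, vscale, e1, e2, e3; vext. }
    rewrite vder_aff, vder_const in E by auto. rewrite cross_lin_a. exact E. }
  assert (Hq2 : forall s, inJ l s -> cross a (Defs.d2 c s) = v0).
  { intros s Hs.
    assert (E : vder (fun t => La (vder c t)) s = vder (fun _ => v0) s).
    { apply (vder_eqJ l); auto. apply vsmooth_lin, vsmooth_vder; auto. apply vsmooth_const.
      intros t Ht. unfold La; rewrite <- cross_lin_a. apply Hq; auto. }
    unfold La in E. rewrite vder_lin, vder_const in E by (apply vsmooth_vder; auto).
    rewrite cross_lin_a. exact E. }
  assert (H0 : inJ l 0) by (unfold inJ; lra).
  apply (ac_cross l c Hc 0 H0). apply (cross_par a); auto. Qed.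

Lemma nonplanar_pts : ~ lies_in_plane l c -> exists s0 s1 s2 s3, inJ l s0 /\ inJ l s1 /\ inJ l s2 /\ inJ l s3 /\
  det3 (vsub (c s1) (c s0)) (vsub (c s2) (c s0)) (vsub (c s3) (c s0)) <> 0.
Proof. intros NP. apply NNPP; intro NE.
  assert (HA : inJ l (- l / 2)) by (unfold inJ; lra). assert (HB : inJ l (l / 2)) by (unfold inJ; lra).
  set (s0 := - l / 2) in *. set (a := vsub (c (l / 2)) (c s0)).
  assert (Ha : a <> v0).
  { intro h. assert (c (l / 2) = c s0) by (unfold a in h; destruct (c (l/2)), (c s0); unfold vsub, v0 in h; injection h; intros; vext; lra).
    apply (ac_inj l c Hc) in H; auto. unfold s0 in H; lra. }
  destruct (classic (exists s2, inJ l s2 /\ cross a (vsub (c s2) (c s0)) <> v0)) as [[s2 [Hs2 Hu]]|NU].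
  - apply NP. exists (c s0), (cross a (vsub (c s2) (c s0))). split; auto.
    intros s Hs. destruct (Req_dec (det3 a (vsub (c s2) (c s0)) (vsub (c s) (c s0))) 0) as [h|h].
    + rewrite <- h. unfold a. destruct (c s), (c s0), (c s2), (c (l/2)); unfold det3, dot, cross, vsub; simpl; ring.
    + exfalso; apply NE. exists s0, (l / 2), s2, s. split; [|split; [|split; [|split]]]; auto.
  - apply (line_curv a Ha). intros s Hs. apply NNPP; intro hn. apply NU. exists s; split; auto. Qed.

Lemma fix_id b0 E1 E2 E3 : ~ lies_in_plane l c -> orthonormal E1 E2 E3 ->
  (forall s, inJ l s -> aff b0 E1 E2 E3 (c s) = c s) -> forall x, aff b0 E1 E2 E3 x = x.
Proof. intros NP HO Hf.
  destruct (nonplanar_pts NP) as (s0 & s1 & s2 & s3 & H0 & H1 & H2 & H3 & Hd).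
  assert (La : forall si, inJ l si -> lin E1 E2 E3 (vsub (c si) (c s0)) = vsub (c si) (c s0)).
  { intros si Hsi. rewrite <- (Hf si Hsi) at 2. rewrite <- (Hf s0 H0) at 2.
    destruct (c si), (c s0); unfold aff, lin, vsub; vext. }
  assert (Lid : forall x, lin E1 E2 E3 x = x).
  { intros x. set (w := vsub (lin E1 E2 E3 x) x).
    assert (D : forall si, inJ l si -> dot w (vsub (c si) (c s0)) = 0).
    { intros si Hsi. transitivity (dot (lin E1 E2 E3 x) (lin E1 E2 E3 (vsub (c si) (c s0))) - dot x (vsub (c si) (c s0))).
      rewrite La by auto. unfold w; destruct (lin E1 E2 E3 x), x, (vsub (c si) (c s0)); unfold dot, vsub; simpl; ring.
      rewrite dot_lin by auto. ring. }
    assert (Z := orth3_zero w _ _ _ Hd (D s1 H1) (D s2 H2) (D s3 H3)).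
    unfold w in Z; destruct (lin E1 E2 E3 x), x; unfold vsub, v0 in Z; injection Z; intros; vext; lra. }
  assert (Hb : b0 = v0).
  { assert (h := Hf s0 H0). unfold aff in h. rewrite Lid in h. destruct b0, (c s0); unfold vadd, v0 in *; injection h; intros; vext; lra. }
  intros x. unfold aff. rewrite Lid, Hb. destruct x; unfold vadd, v0; vext. Qed.
End NP.

Lemma sin_beta_pos c alpha s : 0 < sin (beta_nf c alpha s).
Proof. unfold beta_nf. rewrite sin_shift. assert (h := atan_bound (cot_beta c alpha s)).
  apply cos_gt_0; lra. Qed.

Lemma same_sign l alpha : smooth_fun alpha -> (forall s, inJ l s -> 0 < Rabs (alpha s)) ->
  forall s t, inJ l s -> inJ l t -> 0 < alpha s * alpha t.
Proof. intros Ha Hn s t Hs Ht.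
  assert (ns := Hn s Hs). assert (nt := Hn t Ht).
  assert (s0 : alpha s <> 0) by (intro h; rewrite h, Rabs_R0 in ns; lra).
  assert (t0 : alpha t <> 0) by (intro h; rewrite h, Rabs_R0 in nt; lra).
  destruct (Rlt_dec 0 (alpha s * alpha t)) as [|hn]; auto. exfalso.
  assert (Hc : continuity alpha) by (intro x; apply cont_pt, smooth_cont; auto).
  destruct (IVT_gen alpha s t 0 Hc) as [x [Hx Hx0]].
  { unfold Rmin, Rmax; destruct Rle_dec; nra. }
  assert (inJ l x) by (unfold inJ, Rmin, Rmax in *; destruct Rle_dec; lra).
  specialize (Hn x H). rewrite Hx0, Rabs_R0 in Hn. lra. Qed.

Lemma cos_inj_half a b : 0 < Rabs a < PI / 2 -> 0 < Rabs b < PI / 2 -> 0 < a * b -> cos a = cos b -> a = b.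
Proof. intros Ha Hb Hab Hc.
  assert (key : forall x y, 0 < x < PI / 2 -> 0 < y < PI / 2 -> cos x = cos y -> x = y).
  { intros x y Hx Hy E. destruct (Rtotal_order x y) as [h|[h|h]]; auto.
    - assert (cos y < cos x) by (apply cos_decreasing_1; lra). lra.
    - assert (cos x < cos y) by (apply cos_decreasing_1; lra). lra. }
  destruct (Rle_dec 0 a).
  - assert (0 < b) by nra. rewrite Rabs_pos_eq in Ha, Hb by lra. apply key; lra.
  - assert (b < 0) by nra. rewrite Rabs_left in Ha, Hb by lra.
    assert (- a = - b) by (apply key; [lra|lra|rewrite !cos_neg; auto]). lra. Qed.

Lemma sin_diff0 a b : Rabs a < PI / 2 -> Rabs b < PI / 2 -> sin (a - b) = 0 -> a = b.
Proof. intros Ha Hb H. assert (h1 : - PI < a - b < PI) by (revert Ha Hb; unfold Rabs; repeat destruct Rcase_abs; intros; lra).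
  destruct (Rtotal_order (a - b) 0) as [h|[h|h]].
  - assert (0 < sin (- (a - b))) by (apply sin_gt_0; lra). rewrite sin_neg in H0. lra.
  - lra.
  - assert (0 < sin (a - b)) by (apply sin_gt_0; lra). lra. Qed.

Lemma det_frame l c s X Y : arclength_curve l c -> inJ l s ->
  det3 (lin (tangent c s) (principal_normal c s) (binormal c s) X) (vder c s)
       (lin (tangent c s) (principal_normal c s) (binormal c s) Y) = det3 X e1 Y.
Proof. intros Hc Hs. destruct (ac_frame l c Hc s Hs) as [HO HD].
  replace (vder c s) with (lin (tangent c s) (principal_normal c s) (binormal c s) e1).
  rewrite det3_lin, HD; ring.
  rewrite (ac_tangent l c Hc s Hs). unfold Defs.d1. destruct (vder c s), (principal_normal c s), (binormal c s); unfold lin, e1; vext. Qed.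

Lemma det_coef X Y : det3 X e1 Y = v3 X * v2 Y - v2 X * v3 Y.
Proof. destruct X, Y; unfold det3, dot, cross, e1; simpl; ring. Qed.

Lemma frame_conv Lt Ln Lb t' n' b' k X : t' = vscale (-1) Lt -> n' = Ln -> b' = vscale k Lb ->
  k = 1 \/ k = -1 ->
  lin Lt Ln Lb X = lin t' n' b' (mkV3 (- v1 X) (v2 X) (k * v3 X)).
Proof. intros -> -> -> [->| ->]; destruct X, Lt, Ln, Lb; unfold lin; vext. Qed.

Lemma aff_sub b E1 E2 E3 x y : vsub (aff b E1 E2 E3 x) (aff b E1 E2 E3 y) = lin E1 E2 E3 (vsub x y).
Proof. destruct x, y; unfold aff, lin; vext. Qed.

Lemma aff_sub2 b E1 E2 E3 x y : vsub (vadd b (lin E1 E2 E3 x)) (vadd b (lin E1 E2 E3 y)) = lin E1 E2 E3 (vsub x y).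
Proof. destruct x, y; unfold lin; vext. Qed.

Lemma prod_nz a b c d : 0 < a -> 0 < b -> c <> 0 -> 0 < d -> a * b * (c * d) <> 0.
Proof. intros Ha Hb Hc Hd h. apply Rmult_integral in h. destruct h as [h|h];
  apply Rmult_integral in h; destruct h as [h|h]; try lra; contradiction. Qed.

Lemma cos_pos_alpha l alpha s : (forall s, inJ l s -> 0 < Rabs (alpha s) < PI / 2) -> inJ l s -> 0 < cos (alpha s).
Proof. intros H Hs. specialize (H s Hs). apply cos_gt_0; revert H; unfold Rabs; destruct Rcase_abs; intros; lra. Qed.

Theorem proposition4p4 (l : R) (c : R -> V3) (alpha : R -> R) :
  arclength_curve l c ->
  admissible_normal_form l c alpha ->
  (congruent_small l (normal_form c alpha) (dual_normal_form c alpha) <->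
   (lies_in_plane l c \/
    (has_positive_symmetry l c /\ symmetric_on_J l (geod_curv c alpha)))).
Proof.
  intros Hc (Ha & Hal & _ & _).
  assert (Hl := ac_l l c Hc). assert (Hcs := ac_smooth l c Hc).
  assert (H0 : inJ l 0) by (unfold inJ; lra).
  split.
  - intros (T & eps0 & HT & He0 & Hcong).
    destruct (classic (lies_in_plane l c)) as [P|NP]; [left; exact P|right].
    destruct (iso_affine T HT) as (b0 & E1 & E2 & E3 & HO & HTe).
    assert (HTa : forall x, T x = aff b0 E1 E2 E3 x) by exact HTe.
    assert (Hcong' : forall eps, 0 < eps < eps0 -> forall p,
      (exists q, image_Omega l eps (normal_form c alpha) q /\ p = aff b0 E1 E2 E3 q) <->
      image_Omega l eps (dual_normal_form c alpha) p).
    { intros eps He p. rewrite <- (Hcong eps He p).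
      split; intros [q [Hq Hp]]; exists q; split; auto; rewrite HTe in *; auto. }
    assert (Hmap : forall s, inJ l s -> exists t, inJ l t /\ aff b0 E1 E2 E3 (c s) = c t).
    { intros s Hs. apply (closed_C l c Hc). intros ep Hep.
      set (e' := Rmin (eps0 / 2) (Rmin 1 (ep / 2))).
      assert (q1 := Rmin_l (eps0 / 2) (Rmin 1 (ep / 2))). assert (q2 := Rmin_r (eps0 / 2) (Rmin 1 (ep / 2))).
      assert (q3 := Rmin_l 1 (ep / 2)). assert (q4 := Rmin_r 1 (ep / 2)).
      assert (He' : 0 < e') by (unfold e'; repeat apply Rmin_glb_lt; lra).
      fold e' in q1, q2. clearbody e'.
      destruct (proj1 (Hcong' e' ltac:(lra) (aff b0 E1 E2 E3 (c s)))) as (sg & w & ((Hsg & Hw) & Hp)).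
      { exists (normal_form c alpha s 0). split. exists s, 0. split; [split; auto; lra|reflexivity].
        unfold normal_form. f_equal. destruct (c s), (xi_nf c alpha s); unfold vscale, vadd; vext. }
      exists sg. split; auto. rewrite Hp. unfold dual_normal_form, normal_form.
      replace (vsub (vadd (c sg) (vscale w (xi_nf c (fun t => - alpha t) sg))) (c sg))
        with (vscale w (xi_nf c (fun t => - alpha t) sg)) by (destruct (c sg), (xi_nf c (fun t => - alpha t) sg); unfold vsub, vadd, vscale; vext).
      rewrite N2_scale, (xi_unit l) by auto.
      assert (w ^ 2 < e' ^ 2) by (rewrite <- (pow2_abs w); assert (Rabs w < e') by (unfold Rabs; destruct Rcase_abs; lra);
        assert (0 <= Rabs w) by apply Rabs_pos; nra).
      assert (e' * e' <= e' * 1) by (apply Rmult_le_compat_l; lra). nra. }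
    assert (Htd := tangent_det l c alpha b0 E1 E2 E3 eps0 Hc Ha Hal HO He0 Hcong').
    assert (sa0 := sin_alpha_nz l alpha Hal 0 H0). assert (ca0 := cos_pos_alpha l alpha 0 Hal H0).
    destruct (curve_pm l c b0 E1 E2 E3 Hc HO Hmap) as [Hid|Hrev].
    + exfalso.
      assert (Aid := fix_id l c Hc b0 E1 E2 E3 NP HO Hid).
      assert (Lid : forall x, lin E1 E2 E3 x = x).
      { intro x. assert (h := aff_sub b0 E1 E2 E3 x v0). rewrite !Aid, !vsub_v0 in h. symmetry; exact h. }
      assert (Hd := Htd 0 0 H0 H0 (Hid 0 H0)).
      rewrite Lid, !xi_lin, (det_frame l c), det_coef in Hd by auto. unfold xcoef in Hd; simpl in Hd.
      rewrite cos_neg, sin_neg in Hd.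
      assert (sb1 := sin_beta_pos c alpha 0). assert (sb2 := sin_beta_pos c (fun t => - alpha t) 0).
      apply (prod_nz _ _ _ _ sb1 sb2 sa0 ca0). nra.
    + assert (Hsym : forall s, inJ l s -> c (- s) = aff b0 E1 E2 E3 (c s)) by (intros; symmetry; auto).
      destruct (orth_det_pm _ _ _ HO) as [D1|Dm1].
      * assert (Hal2 : forall s, inJ l s -> alpha (- s) = alpha s).
        { intros s Hs. assert (Hs' := inJ_opp l s Hs).
          assert (Hd := Htd s (- s) Hs Hs' (Hrev s Hs)).
          rewrite !xi_lin, lin_lin in Hd.
          rewrite (frame_conv _ _ _ (tangent c (- s)) (principal_normal c (- s)) (binormal c (- s)) (-1)) in Hd.
          2: apply (rev_tangent l c b0 E1 E2 E3 Hl Hcs HO Hsym s Hs).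
          2: apply (rev_normal l c b0 E1 E2 E3 Hl Hcs HO Hsym s Hs).
          2: rewrite (rev_binormal l c b0 E1 E2 E3 Hl Hcs HO Hsym s Hs), D1; reflexivity.
          2: right; reflexivity.
          rewrite (det_frame l c), det_coef in Hd by auto. unfold xcoef in Hd; simpl in Hd.
          rewrite cos_neg, sin_neg in Hd.
          assert (sb1 := sin_beta_pos c alpha s). assert (sb2 := sin_beta_pos c (fun t => - alpha t) (- s)).
          assert (Hsin : sin (alpha (- s) - alpha s) = 0).
          { rewrite sin_minus.
            assert (sin (beta_nf c alpha s) * sin (beta_nf c (fun t => - alpha t) (- s)) *
                    (sin (alpha (- s)) * cos (alpha s) - cos (alpha (- s)) * sin (alpha s)) = 0) by nra.
            apply Rmult_integral in H. destruct H as [H|H]; auto. exfalso.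
            apply Rmult_integral in H; destruct H; lra. }
          apply sin_diff0 in Hsin; auto. apply Hal; auto. apply Hal; auto. }
        split.
        -- exists T. split; auto. split.
           { intros x0 x1 x2 x3. rewrite !HTe, !aff_sub2, det3_lin, D1. ring. }
           split.
           { exists (c (l / 2)). intro h. assert (HB : inJ l (l / 2)) by (unfold inJ; lra).
             rewrite HTa, Hrev in h by auto. apply (ac_inj l c Hc) in h; auto. lra. apply inJ_opp; auto. }
           intros p; split.
           ++ intros (q & (s & Hs & ->) & ->). exists (- s). split. apply inJ_opp; auto. rewrite HTa; auto.
           ++ intros (s & Hs & ->). exists (c (- s)). split. exists (- s); split; auto; apply inJ_opp; auto.
              rewrite HTa, Hrev by (apply inJ_opp; auto). rewrite Ropp_involutive; auto.
        -- intros s Hs. unfold geod_curv.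
           rewrite (rev_curvature l c b0 E1 E2 E3 Hl Hcs HO Hsym s Hs), Hal2; auto.
      * exfalso.
        assert (Hd := Htd 0 (- 0) H0 (inJ_opp l 0 H0) (Hrev 0 H0)).
        rewrite !xi_lin, lin_lin in Hd.
        rewrite (frame_conv _ _ _ (tangent c (- 0)) (principal_normal c (- 0)) (binormal c (- 0)) 1) in Hd.
        2: apply (rev_tangent l c b0 E1 E2 E3 Hl Hcs HO Hsym 0 H0).
        2: apply (rev_normal l c b0 E1 E2 E3 Hl Hcs HO Hsym 0 H0).
        2: rewrite (rev_binormal l c b0 E1 E2 E3 Hl Hcs HO Hsym 0 H0), Dm1; f_equal; ring.
        2: left; reflexivity.
        rewrite (det_frame l c), det_coef in Hd by first [exact Hc | apply inJ_opp; auto]. unfold xcoef in Hd; simpl in Hd.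
        rewrite cos_neg, sin_neg, Ropp_0 in Hd.
        assert (sb1 := sin_beta_pos c alpha 0). assert (sb2 := sin_beta_pos c (fun t => - alpha t) (- 0)). rewrite Ropp_0 in sb2.
        apply (prod_nz _ _ _ _ sb1 sb2 sa0 ca0). nra.
  - intros [P | [Hsy Hmu]].
    + destruct P as (p0 & u & Hu & Hp). apply (planar_congruent l c alpha p0 u Hc Hu Hp).
    + destruct (classic (lies_in_plane l c)) as [P|NP].
      { destruct P as (p0 & u & Hu & Hp). apply (planar_congruent l c alpha p0 u Hc Hu Hp). }
      destruct Hsy as (T & HT & HOr & (x & Hx) & Himg).
      destruct (iso_affine T HT) as (b0 & E1 & E2 & E3 & HO & HTe).
    assert (HTa : forall x, T x = aff b0 E1 E2 E3 x) by exact HTe.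
      assert (HD1 : det3 E1 E2 E3 = 1).
      { assert (h := HOr v0 e1 e2 e3). rewrite !HTe, !aff_sub2 in h.
        replace (lin E1 E2 E3 (vsub e1 v0)) with E1 in h by (destruct E1; unfold lin, e1, v0; vext).
        replace (lin E1 E2 E3 (vsub e2 v0)) with E2 in h by (destruct E2; unfold lin, e2, v0; vext).
        replace (lin E1 E2 E3 (vsub e3 v0)) with E3 in h by (destruct E3; unfold lin, e3, v0; vext).
        rewrite h. unfold det3, dot, cross, e1, e2, e3, v0, vsub; simpl; ring. }
      assert (Hmap : forall s, inJ l s -> exists t, inJ l t /\ aff b0 E1 E2 E3 (c s) = c t).
      { intros s Hs. destruct (proj1 (Himg (T (c s)))) as (t & Ht & Heq).
        exists (c s); split; auto. exists s; split; auto.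
        exists t; split; auto. rewrite <- HTa; auto. }
      destruct (curve_pm l c b0 E1 E2 E3 Hc HO Hmap) as [Hid|Hrev].
      { exfalso. apply Hx. rewrite HTe. apply (fix_id l c Hc b0 E1 E2 E3 NP HO Hid). }
      assert (Hsym : forall s, inJ l s -> c (- s) = aff b0 E1 E2 E3 (c s)) by (intros; symmetry; auto).
      apply (sym_congruent l c alpha b0 E1 E2 E3 Hc Ha HO HD1 Hsym).
      intros s Hs. assert (Hs' := inJ_opp l s Hs).
      assert (hm := Hmu s Hs). unfold geod_curv in hm.
      rewrite (rev_curvature l c b0 E1 E2 E3 Hl Hcs HO Hsym s Hs) in hm.
      assert (hk := ac_curv l c Hc s Hs).
      assert (hc : cos (alpha (- s)) = cos (alpha s)).
      { apply (Rmult_eq_reg_l (curvature c s)); auto; lra. }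
      apply cos_inj_half; try (apply Hal; auto); auto.
      apply (same_sign l alpha Ha); auto. intros t Ht; apply Hal; auto.
Qed.
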